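(* Under the Simple Resonance Assumption below, let $(\hat{\mathbf E},\hat\psi)$ be the Rellich pair of $H^{\hat\Lambda}$ on $B_{\rho/8D_0}(\theta_* )$ whose eigenvalue is the unique eigenvalue of $H^{\hat\Lambda}(\theta)$ in $B_{3\rho/2}(E_* )$ (with sign of $\hat\psi$ chosen so that $\|\hat\psi-\psi\|\le3\delta/\rho$). Then there is a constant $C$ depending only on $D_0$ (e.g. $C=500D_0^2$) such that, uniformly for $\theta\in B_{\rho/8D_0}(\theta_* )$, $$|\partial_\theta^k(\hat{\mathbf E}-\mathbf E)|\le C\frac{\delta}{\rho^k},\ 0\le k\le2,\qquad \|\partial^k_\theta(\hat\psi-\psi)\|\le C\frac{\delta}{\rho^{k+1}},\ 0\le k\le1.$$
   Context: Setting: $v\in C^2(\mathbb{T},[-1,1])$ with $\|\partial_\theta v\|_\infty+\|\partial^2_\theta v\|_\infty\le D_0$, $\alpha$ irrational, $V_n(\theta)=v(\theta+n\alpha)$, $0<\varepsilon<1/7$, $(\theta_*,E_* )\in\mathbb{T}\times[-2,2]$. $H^\Lambda(\theta)$ is the Dirichlet restriction to a finite interval $\Lambda\subset\mathbb{Z}$ of $(H\psi)(n)=\varepsilon(\psi(n+1)+\psi(n-1))+V_n(\theta)\psi(n)$; vectors on subintervals are extended by zero. For a partition $\mathcal P$ of $\hat\Lambda$ into consecutive intervals $\Lambda_j$: $H^{\hat\Lambda}_{\mathcal P}=\bigoplus H^{\Lambda_j}$, $\Gamma^{\hat\Lambda}_{\mathcal P}=H^{\hat\Lambda}-H^{\hat\Lambda}_{\mathcal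 P}$. A Rellich pair is a $C^2$ family of simple eigenvalues with unit eigenvectors. $R_\perp(E;A,S)=\sum_{\lambda_j\notin S}\chi_{\{\lambda_j\}}(A)/(\lambda_j-E)$; $R^\Lambda_{\theta,E}=(H^\Lambda(\theta)-E)^{-1}$. Simple Resonance Assumption: $\hat\Lambda$ is a finite interval with core subinterval $\Lambda$, shoulders $\Lambda_l,\Lambda_r$ (components of $\hat\Lambda\setminus\Lambda$), partition $\mathcal P=\Lambda_l\cup\Lambda\cup\Lambda_r$. Constants satisfy $\delta<\rho^3/2<\rho/16$, $\log7<\gamma\le|\log\varepsilon|$, $\ell>0$. For all $|\theta-\theta_*|<\rho/(8D_0)$: (1) $H^\Lambda(\theta)$ has a Rellich pair $(\mathbf E,\psi)(\theta)$ with $\mathbf E(\theta_* )=E_*$; (2) $\|\Gamma^{\hat\Lambda}_{\mathcal P}\psi\|\le2\delta$, and every unit eigenvector of $H^{\hat\Lambda}(\theta)$ with eigenvalue in $B_{3\rho/2}(E_* )$ has $\|\Gamma^{\hat\Lambda}_{\mathcal P}\hat\psi\|\le4\delta$; (3) $\log|R^{\Lambda_{l/r}}_{\theta,E}(m,n)|\le-\gamma|m-n|$ for $m,n\in\Lambda_{l/r}$, $|m-n|\ge\ell$, $|E-E_*|<\frac32\rho$; (4) $\mathbf E(\theta)$ is the unique eigenvalue of $H^{\hat\Lambda}_{\mathcal P}(\theta)$ in $B_{7\rho/4}(E_* )$ and $\|R_\perp(E;H^{\hat\Lambda}_{\mathcal P}(\theta),\{\mathbf E(\theta)\})\|\le4\rho^{-1}$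 for $E\in B_{3\rho/2}(E_* )$; (5) $\|\Gamma^{\hat\Lambda}_{\mathcal P}(\partial_\theta\psi)\|\le25D_0\delta\rho^{-1}$. *)

(* Defs.v *)
From Stdlib Require Import Reals ZArith Lra Lia.
From Coquelicot Require Import Coquelicot.
Open Scope R_scope.

Definition inI (lo hi n : Z) : Prop := (lo <= n <= hi)%Z.
Definition inb (lo hi n : Z) : bool := (Z.leb lo n && Z.leb n hi)%bool.

(* x is supported in [lo,hi] (i.e. x is an element of l^2([lo,hi]) extended by zero) *)
Definition supp (lo hi : Z) (x : Z -> R) : Prop :=
  forall n, ~ inI lo hi n -> x n = 0.

Definition restrict (lo hi : Z) (x : Z -> R) : Z -> R :=
  fun n => if inb lo hi n then x n else 0.

Fixpoint nsum (N : nat) (f : nat -> R) : R :=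
  match N with O => 0 | S k => nsum k f + f k end.

Definition card (lo hi : Z) : nat := Z.to_nat (hi - lo + 1).

Definition zsum (lo hi : Z) (f : Z -> R) : R :=
  nsum (card lo hi) (fun k => f (lo + Z.of_nat k)%Z).

Definition inner (lo hi : Z) (x y : Z -> R) : R := zsum lo hi (fun n => x n * y n).
Definition vnorm (lo hi : Z) (x : Z -> R) : R := sqrt (zsum lo hi (fun n => x n ^ 2)).

Definition Vpot (v : R -> R) (alpha : R) (n : Z) (theta : R) : R :=
  v (theta + IZR n * alpha).

(* Dirichlet restriction H^[lo,hi](theta) of
   (H psi)(n) = eps (psi(n+1)+psi(n-1)) + V_n(theta) psi(n), acting on Z -> R
   (the input is restricted to [lo,hi], the output is extended by zero). *)
Definition Hres (v : R -> R) (alpha eps : R) (lo hi : Z) (theta : R)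
  (x : Z -> R) : Z -> R :=
  fun n => if inb lo hi n then
     eps * (restrict lo hi x (n + 1)%Z + restrict lo hi x (n - 1)%Z)
     + Vpot v alpha n theta * restrict lo hi x n
   else 0.

(* Partition of hatLambda = [a,d] into Lambda_l = [a,b-1], Lambda = [b,c],
   Lambda_r = [c+1,d]: H_P = direct sum of the three Dirichlet restrictions *)
Definition HP (v : R -> R) (alpha eps : R) (a b c d : Z) (theta : R)
  (x : Z -> R) : Z -> R :=
  fun n => Hres v alpha eps a (b - 1) theta x n + Hres v alpha eps b c theta x n
           + Hres v alpha eps (c + 1) d theta x n.

Definition GammaP (v : R -> R) (alpha eps : R) (a b c d : Z) (theta : R)
  (x : Z -> R) : Z -> R :=
  fun n => Hres v alpha eps a d theta x n - HP v alpha eps a b c d theta x n.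

Definition is_eigval (A : (Z -> R) -> (Z -> R)) (lo hi : Z) (lam : R) : Prop :=
  exists x, supp lo hi x /\ (exists n, x n <> 0) /\ forall n, A x n = lam * x n.

Definition C2_on (P : R -> Prop) (f : R -> R) : Prop :=
  forall t, P t -> ex_derive f t /\ ex_derive (Derive f) t
                   /\ continuous (Derive (Derive f)) t.

Definition RellichPair (A : R -> (Z -> R) -> (Z -> R)) (lo hi : Z)
  (P : R -> Prop) (Ef : R -> R) (psi : R -> Z -> R) : Prop :=
  C2_on P Ef /\ (forall n, C2_on P (fun t => psi t n)) /\
  forall t, P t ->
    supp lo hi (psi t) /\ vnorm lo hi (psi t) = 1 /\
    (forall n, A t (psi t) n = Ef t * psi t n) /\
    (forall x, supp lo hi x -> (forall n, A t x n = Ef t * x n) ->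
       exists c, forall n, x n = c * psi t n).

Definition onb_eig (A : (Z -> R) -> (Z -> R)) (lo hi : Z)
  (u : nat -> Z -> R) (lam : nat -> R) : Prop :=
  (forall k, (k < card lo hi)%nat ->
     supp lo hi (u k) /\ forall n, A (u k) n = lam k * u k n) /\
  (forall j k, (j < card lo hi)%nat -> (k < card lo hi)%nat ->
     inner lo hi (u j) (u k) = if Nat.eqb j k then 1 else 0).

(* R_perp(E; A, {lam0}) phi = sum_{lambda_j <> lam0} chi_{lambda_j}(A) phi / (lambda_j - E),
   written through an orthonormal eigenbasis (summing the rank-one projections of
   all basis vectors with eigenvalue lambda_j gives chi_{lambda_j}(A)). *)
Definition Rperp (lo hi : Z) (u : nat -> Z -> R) (lam : nat -> R) (lam0 E : R)
  (phi : Z -> R) : Z -> R :=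
  fun n => nsum (card lo hi) (fun k =>
     if Req_EM_T (lam k) lam0 then 0
     else inner lo hi (u k) phi / (lam k - E) * u k n).

Definition Rperp_norm_le (A : (Z -> R) -> (Z -> R)) (lo hi : Z) (lam0 E M : R) : Prop :=
  forall u lam, onb_eig A lo hi u lam ->
  forall phi, supp lo hi phi ->
    vnorm lo hi (Rperp lo hi u lam lam0 E phi) <= M * vnorm lo hi phi.

Definition deltaZ (m : Z) : Z -> R := fun k => if Z.eqb k m then 1 else 0.

(* (H^[lo,hi](theta) - E) is invertible on l^2([lo,hi]) and its Green's function
   R(m,n) satisfies log|R(m,n)| <= -gamma |m-n| for |m-n| >= ell
   (stated as |R(m,n)| <= exp(-gamma|m-n|), with log 0 = -infinity). *)
Definition green_decay (v : R -> R) (alpha eps : R) (lo hi : Z) (theta E gamma ell : R)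
  : Prop :=
  (forall x, supp lo hi x -> (forall n, Hres v alpha eps lo hi theta x n = E * x n) ->
     forall n, x n = 0) /\
  (forall m n, inI lo hi m -> inI lo hi n -> ell <= IZR (Z.abs (m - n)) ->
     forall x, supp lo hi x ->
       (forall k, Hres v alpha eps lo hi theta x k - E * x k = deltaZ n k) ->
       Rabs (x m) <= exp (- gamma * IZR (Z.abs (m - n)))).

(* Main.v *)
Require Import Defs.
From Stdlib Require Import Reals ZArith.
From Coquelicot Require Import Coquelicot.
Open Scope R_scope.
From Stdlib Require Import Lra Lia Psatz FunctionalExtensionality.
Module Bridge.
From mathcomp Require Import all_boot all_order all_algebra.
From mathcomp Require Import all_classical all_reals all_analysis.
From mathcomp Require Import Rstruct Rstruct_topology.
Import Order.TTheory GRing.Theory Num.Theory.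
Local Open Scope ring_scope.
Local Open Scope classical_set_scope.

Lemma nsum_big (N:nat) (f : nat -> R) : nsum N f = \sum_(i < N) f i.
Proof. elim: N => [|N IH] /=; [by rewrite big_ord0 | by rewrite big_ord_recr /= IH]. Qed.

Lemma contD (T : topologicalType) (f g : T -> R) : continuous f -> continuous g -> continuous (fun t => f t + g t).
Proof. move=> Hf Hg t. exact: (@continuousD R R^o T f g t (Hf t) (Hg t)). Qed.
Lemma contM (T : topologicalType) (f g : T -> R) : continuous f -> continuous g -> continuous (fun t => f t * g t).
Proof. move=> Hf Hg t. exact: (@continuousM R T f g t (Hf t) (Hg t)). Qed.

Lemma cont_sum_seq (T : topologicalType) (I : Type) (s : seq I) (f : I -> T -> R) :
  (forall j, continuous (f j)) -> continuous (fun t => \big[+%R/0]_(j <- s) f j t).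
Proof.
move=> H; elim: s => [|j s IH].
  under eq_fun do rewrite big_nil. exact: cst_continuous.
under eq_fun do rewrite big_cons.
exact: contD.
Qed.

Lemma coord_cont n (j : 'I_n) : continuous (fun r : 'rV[R]_n => r ord0 j).
Proof. exact: coord_continuous. Qed.

Lemma lsq_min (N K : nat) (L : nat -> nat -> R) (c : nat -> R) :
  (exists x : nat -> R, nsum N (fun i => Rmult (x i) (x i)) = R1 /\ nsum N (fun i => Rmult (c i) (x i)) = R0) ->
  exists x0 : nat -> R, nsum N (fun i => Rmult (x0 i) (x0 i)) = R1 /\ nsum N (fun i => Rmult (c i) (x0 i)) = R0 /\
   forall x, nsum N (fun i => Rmult (x i) (x i)) = R1 -> nsum N (fun i => Rmult (c i) (x i)) = R0 ->
     Rle (nsum K (fun k => Rmult (nsum N (fun i => Rmult (L k i) (x0 i))) (nsum N (fun i => Rmult (L k i) (x0 i)))))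
         (nsum K (fun k => Rmult (nsum N (fun i => Rmult (L k i) (x i))) (nsum N (fun i => Rmult (L k i) (x i))))).
Proof.
move=> [x [x1 xc]].
pose xr (r : 'rV[R]_N) : nat -> R := fun i => \sum_(j < N) (if nat_of_ord j == i then r ord0 j else 0).
have xrE r (j : 'I_N) : xr r j = r ord0 j.
  rewrite /xr (bigD1 j) //= eqxx big1 ?addr0 // => k /negbTE kj.
  by rewrite (_ : (nat_of_ord k == nat_of_ord j) = false).
have nsE (g : R -> R) r : nsum N (fun i => g (xr r i)) = \sum_(j < N) g (r ord0 j).
  by rewrite nsum_big; apply: eq_bigr => j _; rewrite xrE.
pose G (r : 'rV[R]_N) := \sum_(j < N) r ord0 j * r ord0 j.
pose Hc (r : 'rV[R]_N) := \sum_(j < N) c j * r ord0 j.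
pose Fk (k : nat) (r : 'rV[R]_N) := \sum_(j < N) L k j * r ord0 j.
pose F (r : 'rV[R]_N) := \sum_(k < K) Fk k r * Fk k r.
have cG : continuous G.
  apply: cont_sum_seq => j; apply: contM; exact: coord_cont.
have cHc : continuous Hc.
  apply: cont_sum_seq => j; apply: contM; [exact: cst_continuous| exact: coord_cont].
have cFk k : continuous (Fk k).
  apply: cont_sum_seq => j; apply: contM; [exact: cst_continuous| exact: coord_cont].
have cF : continuous F.
  apply: cont_sum_seq => k; apply: contM; exact: cFk.
pose A := [set r | G r = 1 /\ Hc r = 0].
have clA : closed A.
  have -> : A = G @^-1` [set 1] `&` Hc @^-1` [set 0].
    by apply/seteqP; split => r /=.
  apply: closedI; apply: preimage_closed; try exact: closed_eq.
    by move=> r _; exact: cG.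
  by move=> r _; exact: cHc.
pose B := [set v : 'rV[R]_N | forall i : 'I_N, (fun=> `[(-1:R), 1]%classic) i (v ord0 i)].
have cB : compact B.
  apply: rV_compact => _; exact: segment_compact.
have AB : A `<=` B.
  move=> r [Gr _] i /=.
  have : r ord0 i * r ord0 i <= 1.
    rewrite -Gr /G (bigD1 i) //= lerDl.
    by apply: sumr_ge0 => j _; rewrite -expr2 sqr_ge0.
  move=> /RleP H.
  set a := r ord0 i in H *.
  have H' : Rle (Rmult a a) R1 := H.
  have [h1 h2] : (Rle (Ropp R1) a /\ Rle a R1) by split; Psatz.nra.
  rewrite in_itv /=; apply/andP; split; apply/RleP; [exact h1| exact h2].
have cA : compact A by exact: subclosed_compact clA cB AB.
have A0 : A !=set0.
  exists (\row_(j < N) x j); split.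
    apply: (etrans _ x1); rewrite nsum_big; apply: eq_bigr => j _; by rewrite mxE.
  apply: (etrans _ xc); rewrite nsum_big; apply: eq_bigr => j _; by rewrite mxE.
have [r0 r0A r0min] := compact_EVT_min A0 cA (continuous_subspaceT cF).
have [G1 H0] : A r0 by move: r0A; rewrite inE.
exists (xr r0); split; [|split].
- by rewrite (nsE (fun a => a * a)); exact G1.
- apply: (etrans _ H0); rewrite nsum_big; apply: eq_bigr => j _; by rewrite xrE.
- move=> y y1 yc.
  have -> : nsum K (fun k => Rmult (nsum N (fun i => Rmult (L k i) (xr r0 i))) (nsum N (fun i => Rmult (L k i) (xr r0 i)))) = F r0.
    rewrite nsum_big /F; apply: eq_bigr => k _.
    by rewrite /Fk nsum_big (eq_bigr (fun j : 'I_N => L k j * r0 ord0 j)) // => j _; rewrite xrE.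
  have -> : nsum K (fun k => Rmult (nsum N (fun i => Rmult (L k i) (y i))) (nsum N (fun i => Rmult (L k i) (y i)))) = F (\row_(j < N) y j).
    rewrite nsum_big /F; apply: eq_bigr => k _.
    by rewrite /Fk nsum_big (eq_bigr (fun j : 'I_N => L k j * (\row_(l < N) y l) ord0 j)) // => j _; rewrite mxE.
  apply/RleP; apply: r0min; rewrite inE; split.
    apply: (etrans _ y1); rewrite nsum_big; apply: eq_bigr => j _; by rewrite mxE.
  apply: (etrans _ yc); rewrite nsum_big; apply: eq_bigr => j _; by rewrite mxE.
Qed.
End Bridge.

From Stdlib Require Import Reals ZArith Lra Lia Psatz FunctionalExtensionality.
From Coquelicot Require Import Coquelicot.
Open Scope R_scope.

Lemma nsum_ext N f g : (forall k, (k < N)%nat -> f k = g k) -> nsum N f = nsum N g.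
Proof. induction N; simpl; intros H; auto. rewrite IHN by (intros; apply H; lia). rewrite H by lia. auto. Qed.
Lemma nsum_plus N f g : nsum N (fun k => f k + g k) = nsum N f + nsum N g.
Proof. induction N; simpl; [lra|rewrite IHN; lra]. Qed.
Lemma nsum_minus N f g : nsum N (fun k => f k - g k) = nsum N f - nsum N g.
Proof. induction N; simpl; [lra|rewrite IHN; lra]. Qed.
Lemma nsum_scal N c f : nsum N (fun k => c * f k) = c * nsum N f.
Proof. induction N; simpl; [lra|rewrite IHN; lra]. Qed.
Lemma nsum_zero N : nsum N (fun _ => 0) = 0.
Proof. induction N; simpl; [lra|rewrite IHN; lra]. Qed.
Lemma nsum_le N f g : (forall k, (k < N)%nat -> f k <= g k) -> nsum N f <= nsum N g.
Proof. induction N; simpl; intros H; [lra|]. pose proof (H N ltac:(lia)). pose proof (IHN ltac:(intros; apply H; lia)). lra. Qed.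
Lemma nsum_nonneg N f : (forall k, (k < N)%nat -> 0 <= f k) -> 0 <= nsum N f.
Proof. intros H. rewrite <- (nsum_zero N). apply nsum_le. auto. Qed.
Lemma nsum_split m n f : nsum (m + n) f = nsum m f + nsum n (fun i => f (m + i)%nat).
Proof. induction n; simpl. rewrite Nat.add_0_r; lra. rewrite Nat.add_succ_r. simpl. rewrite IHn; lra. Qed.
Lemma nsum_abs N f : Rabs (nsum N f) <= nsum N (fun k => Rabs (f k)).
Proof. induction N; simpl. rewrite Rabs_R0; lra. eapply Rle_trans. apply Rabs_triang. lra. Qed.

Lemma zsum_ext lo hi f g : (forall n, inI lo hi n -> f n = g n) -> zsum lo hi f = zsum lo hi g.
Proof. intros H. unfold zsum, card. apply nsum_ext. intros k Hk. apply H. unfold inI. lia. Qed.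
Lemma zsum_plus lo hi f g : zsum lo hi (fun n => f n + g n) = zsum lo hi f + zsum lo hi g.
Proof. apply nsum_plus. Qed.
Lemma zsum_minus lo hi f g : zsum lo hi (fun n => f n - g n) = zsum lo hi f - zsum lo hi g.
Proof. apply nsum_minus. Qed.
Lemma zsum_scal lo hi c f : zsum lo hi (fun n => c * f n) = c * zsum lo hi f.
Proof. apply nsum_scal. Qed.
Lemma zsum_zero lo hi : zsum lo hi (fun _ => 0) = 0.
Proof. apply nsum_zero. Qed.
Lemma zsum_le lo hi f g : (forall n, inI lo hi n -> f n <= g n) -> zsum lo hi f <= zsum lo hi g.
Proof. intros H. apply nsum_le. intros k Hk. apply H. unfold inI, card in *. lia. Qed.
Lemma zsum_nonneg lo hi f : (forall n, inI lo hi n -> 0 <= f n) -> 0 <= zsum lo hi f.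
Proof. intros H. rewrite <- (zsum_zero lo hi). apply zsum_le. auto. Qed.
Lemma zsum_abs lo hi f : Rabs (zsum lo hi f) <= zsum lo hi (fun n => Rabs (f n)).
Proof. apply nsum_abs. Qed.
Lemma zsum_split lo m hi f : (lo <= m <= hi + 1)%Z ->
  zsum lo hi f = zsum lo (m - 1) f + zsum m hi f.
Proof.
  intros H. unfold zsum, card.
  replace (Z.to_nat (hi - lo + 1)) with (Z.to_nat (m - 1 - lo + 1) + Z.to_nat (hi - m + 1))%nat by lia.
  rewrite nsum_split. f_equal. apply nsum_ext. intros k _. f_equal. lia.
Qed.
Lemma zsum_empty lo hi f : (hi < lo)%Z -> zsum lo hi f = 0.
Proof. intros H. unfold zsum, card. replace (Z.to_nat (hi - lo + 1)) with 0%nat by lia. reflexivity. Qed.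
Lemma zsum_single n f : zsum n n f = f n.
Proof. unfold zsum, card. replace (Z.to_nat (n - n + 1)) with 1%nat by lia. simpl. rewrite Z.add_0_r. lra. Qed.
Lemma zsum_shift lo hi f : zsum lo hi (fun n => f (n + 1)%Z) = zsum (lo + 1) (hi + 1) f.
Proof. unfold zsum, card. replace (hi + 1 - (lo + 1) + 1)%Z with (hi - lo + 1)%Z by lia.
  apply nsum_ext. intros. f_equal. lia. Qed.
Lemma zsum_sub lo lo' hi' hi f : (lo <= lo')%Z -> (lo' <= hi' + 1)%Z -> (hi' <= hi)%Z ->
  (forall n, inI lo hi n -> ~ inI lo' hi' n -> f n = 0) -> zsum lo hi f = zsum lo' hi' f.
Proof.
  intros H1 H2 H3 H.
  rewrite (zsum_split lo lo' hi) by lia. rewrite (zsum_split lo' (hi'+1) hi) by lia.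
  rewrite (zsum_ext lo (lo'-1) f (fun _ => 0)), (zsum_ext (hi'+1) hi f (fun _ => 0)), !zsum_zero.
  replace (hi' + 1 - 1)%Z with hi' by lia. lra.
  intros n Hn; apply H; unfold inI in *; lia.
  intros n Hn; apply H; unfold inI in *; lia.
Qed.


Definition Sq lo hi (x : Z -> R) := zsum lo hi (fun n => x n ^ 2).
Lemma Sq_nonneg lo hi x : 0 <= Sq lo hi x.
Proof. apply zsum_nonneg. intros. nra. Qed.
Lemma inner_self lo hi x : inner lo hi x x = Sq lo hi x.
Proof. apply zsum_ext. intros. ring. Qed.
Lemma inner_sym lo hi x y : inner lo hi x y = inner lo hi y x.
Proof. apply zsum_ext. intros. ring. Qed.
Lemma vnorm_nonneg lo hi x : 0 <= vnorm lo hi x.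
Proof. apply sqrt_pos. Qed.
Lemma vnorm_sq lo hi x : vnorm lo hi x * vnorm lo hi x = Sq lo hi x.
Proof. apply sqrt_sqrt. apply Sq_nonneg. Qed.
Lemma vnorm_1 lo hi x : vnorm lo hi x = 1 -> Sq lo hi x = 1.
Proof. intros H. rewrite <- vnorm_sq, H. ring. Qed.
Lemma Sq_expand lo hi x y t :
  Sq lo hi (fun n => x n + t * y n) = Sq lo hi x + 2 * t * inner lo hi x y + t ^ 2 * Sq lo hi y.
Proof. unfold Sq, inner. rewrite <- zsum_scal, <- zsum_scal, <- !zsum_plus. apply zsum_ext. intros. ring. Qed.
Lemma CS2 lo hi x y : (inner lo hi x y) ^ 2 <= Sq lo hi x * Sq lo hi y.
Proof.
  pose proof (Sq_nonneg lo hi x) as Hx. pose proof (Sq_nonneg lo hi y) as Hy.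
  assert (Ht : forall t, 0 <= Sq lo hi x + 2 * t * inner lo hi x y + t ^ 2 * Sq lo hi y).
  { intros t. rewrite <- Sq_expand. apply Sq_nonneg. }
  set (X := Sq lo hi x) in *. set (Y := Sq lo hi y) in *. set (P := inner lo hi x y) in *.
  destruct (Req_dec Y 0) as [HY|HY].
  - rewrite HY in Ht. destruct (Req_dec P 0) as [HP|HP]. rewrite HP. nra.
    exfalso. specialize (Ht (- (X + 1) / (2 * P))).
    replace (X + 2 * (- (X + 1) / (2 * P)) * P + (- (X + 1) / (2 * P)) ^ 2 * 0) with (-1) in Ht by (field; auto). lra.
  - specialize (Ht (- P / Y)).
    assert (0 < Y) by lra.
    replace (X + 2 * (- P / Y) * P + (- P / Y) ^ 2 * Y) with ((X * Y - P ^ 2) / Y) in Ht by (field; auto).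
    assert (0 <= X * Y - P ^ 2). { apply Rmult_le_reg_r with (/ Y). apply Rinv_0_lt_compat; lra.
      rewrite Rmult_0_l. exact Ht. } lra.
Qed.
Lemma CS lo hi x y : Rabs (inner lo hi x y) <= vnorm lo hi x * vnorm lo hi y.
Proof.
  assert (H0 : 0 <= vnorm lo hi x * vnorm lo hi y) by (apply Rmult_le_pos; apply vnorm_nonneg).
  rewrite <- (Rabs_pos_eq _ H0). apply Rsqr_le_abs_0.
  unfold Rsqr. replace (vnorm lo hi x * vnorm lo hi y * (vnorm lo hi x * vnorm lo hi y))
    with ((vnorm lo hi x * vnorm lo hi x) * (vnorm lo hi y * vnorm lo hi y)) by ring.
  rewrite !vnorm_sq. pose proof (CS2 lo hi x y). simpl in *. lra.
Qed.
Lemma vnorm_le_iff lo hi x M : 0 <= M -> Sq lo hi x <= M * M -> vnorm lo hi x <= M.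
Proof. intros HM H. unfold vnorm. rewrite <- (sqrt_square M) by auto. apply sqrt_le_1_alt. exact H. Qed.
Lemma vnorm_triang lo hi x y : vnorm lo hi (fun n => x n + y n) <= vnorm lo hi x + vnorm lo hi y.
Proof.
  apply vnorm_le_iff. pose proof (vnorm_nonneg lo hi x); pose proof (vnorm_nonneg lo hi y); lra.
  pose proof (Sq_expand lo hi x y 1) as E. 
  replace (fun n => x n + 1 * y n) with (fun n => x n + y n) in E by (apply functional_extensionality; intros; ring).
  rewrite E. pose proof (CS lo hi x y). pose proof (Rle_abs (inner lo hi x y)).
  rewrite <- (vnorm_sq lo hi x), <- (vnorm_sq lo hi y). nra.
Qed.
Lemma vnorm_scal lo hi c x : vnorm lo hi (fun n => c * x n) = Rabs c * vnorm lo hi x.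
Proof.
  unfold vnorm. rewrite <- (sqrt_Rsqr (Rabs c)) by apply Rabs_pos. rewrite <- sqrt_mult_alt.
  f_equal. rewrite <- Rsqr_abs. unfold Rsqr. rewrite <- zsum_scal. apply zsum_ext; intros; ring.
  apply Rle_0_sqr.
Qed.
Lemma vnorm_ext lo hi x y : (forall n, inI lo hi n -> x n = y n) -> vnorm lo hi x = vnorm lo hi y.
Proof. intros H. unfold vnorm. f_equal. apply zsum_ext. intros. rewrite H; auto. Qed.
Lemma vnorm_opp_sub lo hi x y : vnorm lo hi (fun n => x n - y n) = vnorm lo hi (fun n => y n - x n).
Proof. unfold vnorm. f_equal. apply zsum_ext; intros; ring. Qed.
Lemma vnorm_mult_bound lo hi w x M : 0 <= M -> (forall n, inI lo hi n -> Rabs (w n) <= M) ->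
  vnorm lo hi (fun n => w n * x n) <= M * vnorm lo hi x.
Proof.
  intros HM H.
  apply vnorm_le_iff. pose proof (vnorm_nonneg lo hi x); nra.
  replace (M * vnorm lo hi x * (M * vnorm lo hi x)) with (M * M * (vnorm lo hi x * vnorm lo hi x)) by ring.
  rewrite vnorm_sq. unfold Sq. rewrite <- zsum_scal. apply zsum_le. intros n Hn.
  specialize (H n Hn). pose proof (Rabs_pos (w n)). 
  assert (w n ^ 2 <= M * M). { rewrite <- pow2_abs. nra. }
  replace ((w n * x n) ^ 2) with (w n ^ 2 * x n ^ 2) by ring. pose proof (pow2_ge_0 (x n)). nra.
Qed.
Lemma Sq_zero lo hi x : Sq lo hi x = 0 -> forall n, inI lo hi n -> x n = 0.
Proof.
  intros H n Hn. unfold Sq, zsum, card in H. unfold inI in Hn.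
  set (k := Z.to_nat (n - lo)).
  assert (Hk : (k < Z.to_nat (hi - lo + 1))%nat) by (unfold k; lia).
  assert (Hn' : n = (lo + Z.of_nat k)%Z) by (unfold k; lia).
  clearbody k. revert Hk H. generalize (Z.to_nat (hi - lo + 1)) as N. intros N Hk' H.
  assert (Gen : forall M, (k < M)%nat -> (M <= N)%nat -> x (lo + Z.of_nat k)%Z ^ 2 <= nsum M (fun k0 => x (lo + Z.of_nat k0)%Z ^ 2)).
  { induction M; intros; [lia|]. cbn [nsum]. destruct (Nat.eq_dec k M).
    - subst M. assert (0 <= nsum k (fun k0 => x (lo + Z.of_nat k0)%Z ^ 2)) by (apply nsum_nonneg; intros; apply pow2_ge_0). lra.
    - assert (x (lo + Z.of_nat M)%Z ^ 2 >= 0) by nra. specialize (IHM ltac:(lia) ltac:(lia)). lra. }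
  specialize (Gen N Hk' (le_n _)). rewrite H in Gen. rewrite Hn'. nra.
Qed.


Lemma inb_true lo hi n : inI lo hi n -> inb lo hi n = true.
Proof. unfold inI, inb. intros H. apply andb_true_intro; split; apply Z.leb_le; lia. Qed.
Lemma inb_false lo hi n : ~ inI lo hi n -> inb lo hi n = false.
Proof. unfold inI, inb. intros H. destruct (Z.leb lo n) eqn:E1, (Z.leb n hi) eqn:E2; auto.
  apply Z.leb_le in E1, E2. exfalso; lia. Qed.
Lemma inb_spec lo hi n : {inI lo hi n /\ inb lo hi n = true} + {~ inI lo hi n /\ inb lo hi n = false}.
Proof. destruct (Z_le_dec lo n), (Z_le_dec n hi).
  left; split; [unfold inI; lia| apply inb_true; unfold inI; lia].
  all: right; split; [unfold inI; lia| apply inb_false; unfold inI; lia]. Qed.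

Lemma restrict_in lo hi x n : inI lo hi n -> restrict lo hi x n = x n.
Proof. intros H. unfold restrict. rewrite inb_true; auto. Qed.
Lemma restrict_out lo hi x n : ~ inI lo hi n -> restrict lo hi x n = 0.
Proof. intros H. unfold restrict. rewrite inb_false; auto. Qed.
Lemma restrict_supp lo hi x n : supp lo hi x -> restrict lo hi x n = x n.
Proof. intros H. destruct (inb_spec lo hi n) as [[H1 _]|[H1 _]].
  apply restrict_in; auto. rewrite restrict_out, H; auto. Qed.

Lemma Hres_out v al ep lo hi t x n : ~ inI lo hi n -> Hres v al ep lo hi t x n = 0.
Proof. intros H. unfold Hres. rewrite inb_false; auto. Qed.
Lemma Hres_in v al ep lo hi t x n : inI lo hi n -> Hres v al ep lo hi t x n =
  ep * (restrict lo hi x (n + 1)%Z + restrict lo hi x (n - 1)%Z) + Vpot v al n t * restrict lo hi x n.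
Proof. intros H. unfold Hres. rewrite inb_true; auto. Qed.
Lemma Hres_supp v al ep lo hi t x : supp lo hi (Hres v al ep lo hi t x).
Proof. intros n H. apply Hres_out; auto. Qed.
Lemma Hres_lin v al ep lo hi t x y c n :
  Hres v al ep lo hi t (fun m => x m + c * y m) n = Hres v al ep lo hi t x n + c * Hres v al ep lo hi t y n.
Proof. unfold Hres, restrict. destruct (inb lo hi n); [|ring].
  destruct (inb lo hi (n+1)), (inb lo hi (n-1)), (inb lo hi n); ring. Qed.
Lemma Hres_ext v al ep lo hi t x y n : (forall m, inI lo hi m -> x m = y m) ->
  Hres v al ep lo hi t x n = Hres v al ep lo hi t y n.
Proof. intros H. unfold Hres, restrict.
  destruct (inb_spec lo hi (n+1)) as [[? ->]|[? ->]], (inb_spec lo hi (n-1)) as [[? ->]|[? ->]],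
    (inb_spec lo hi n) as [[? ->]|[? ->]]; rewrite ?H; auto. Qed.

Lemma shift_sum lo hi f g : (lo <= hi)%Z -> (forall n, ~ inI lo hi n -> f n = 0) -> (forall n, ~ inI lo hi n -> g n = 0) ->
  zsum lo hi (fun n => f n * g (n + 1)%Z) = zsum lo hi (fun n => f (n - 1)%Z * g n).
Proof.
  intros Hle Hf Hg.
  rewrite (zsum_split lo hi hi) by lia. rewrite zsum_single.
  rewrite (zsum_split lo (lo+1) hi (fun n => f (n - 1)%Z * g n)) by lia.
  replace (lo + 1 - 1)%Z with lo by lia. rewrite zsum_single.
  rewrite (Hg (hi+1)%Z) by (unfold inI; lia). rewrite (Hf (lo-1)%Z) by (unfold inI; lia).
  pose proof (zsum_shift lo (hi-1) (fun n => f (n-1)%Z * g n)) as E. replace (hi - 1 + 1)%Z with hi in E by lia.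
  rewrite <- E. cbv beta in *.
  assert (zsum lo (hi - 1) (fun n => f n * g (n + 1)%Z) = zsum lo (hi - 1) (fun n => f (n + 1 - 1)%Z * g (n + 1)%Z)).
  { apply zsum_ext. intros. replace (n + 1 - 1)%Z with n by lia. auto. }
  lra.
Qed.

Lemma Hres_sym v al ep lo hi t x y : (lo <= hi)%Z ->
  inner lo hi x (Hres v al ep lo hi t y) = inner lo hi (Hres v al ep lo hi t x) y.
Proof.
  intros Hle. unfold inner.
  set (rx := restrict lo hi x). set (ry := restrict lo hi y).
  assert (Hx : forall n, ~ inI lo hi n -> rx n = 0) by (intros; apply restrict_out; auto).
  assert (Hy : forall n, ~ inI lo hi n -> ry n = 0) by (intros; apply restrict_out; auto).
  rewrite (zsum_ext lo hi _ (fun n => ep * (rx n * ry (n+1)%Z) + ep * (rx n * ry (n-1)%Z) + Vpot v al n t * rx n * ry n)).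
  2:{ intros n Hn. rewrite Hres_in by auto. unfold rx, ry; rewrite (restrict_in lo hi x n Hn). ring. }
  rewrite (zsum_ext lo hi (fun n => Hres v al ep lo hi t x n * y n) (fun n => ep * (rx (n+1)%Z * ry n) + ep * (rx (n-1)%Z * ry n) + Vpot v al n t * rx n * ry n)).
  2:{ intros n Hn. rewrite Hres_in by auto. unfold rx, ry; rewrite (restrict_in lo hi y n Hn). ring. }
  rewrite !zsum_plus, !zsum_scal. rewrite (shift_sum lo hi rx ry) by auto.
  rewrite (zsum_ext lo hi (fun n => rx n * ry (n - 1)%Z) (fun n => ry (n - 1)%Z * rx n)) by (intros; ring).
  rewrite <- (shift_sum lo hi ry rx) by auto.
  rewrite (zsum_ext lo hi (fun n => ry n * rx (n + 1)%Z) (fun n => rx (n + 1)%Z * ry n)) by (intros; ring).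
  ring.
Qed.


Lemma nsum_single N f k : (k < N)%nat -> (forall i, (i < N)%nat -> i <> k -> f i = 0) -> nsum N f = f k.
Proof.
  induction N; intros Hk H; [lia|]. simpl. destruct (Nat.eq_dec k N).
  - subst. rewrite (nsum_ext N f (fun _ => 0)) by (intros; apply H; lia). rewrite nsum_zero; ring.
  - rewrite IHN by (auto; lia). rewrite (H N) by lia. ring.
Qed.

Lemma inner_plus_r lo hi x y z c : inner lo hi x (fun n => y n + c * z n) = inner lo hi x y + c * inner lo hi x z.
Proof. unfold inner. rewrite <- zsum_scal, <- zsum_plus. apply zsum_ext; intros; ring. Qed.
Lemma inner_plus_l lo hi x y z c : inner lo hi (fun n => y n + c * z n) x = inner lo hi y x + c * inner lo hi z x.
Proof. unfold inner. rewrite <- zsum_scal, <- zsum_plus. apply zsum_ext; intros; ring. Qed.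
Lemma inner_ext_l lo hi x x' y : (forall n, inI lo hi n -> x n = x' n) -> inner lo hi x y = inner lo hi x' y.
Proof. intros H. apply zsum_ext. intros. rewrite H; auto. Qed.
Lemma inner_ext_r lo hi x y y' : (forall n, inI lo hi n -> y n = y' n) -> inner lo hi x y = inner lo hi x y'.
Proof. intros H. apply zsum_ext. intros. rewrite H; auto. Qed.
Lemma inner_zero_r lo hi x y : (forall n, inI lo hi n -> y n = 0) -> inner lo hi x y = 0.
Proof. intros H. unfold inner. rewrite (zsum_ext _ _ _ (fun _ => 0)). apply zsum_zero. intros. rewrite H; auto; ring. Qed.
Lemma Sq_ext lo hi x y : (forall n, inI lo hi n -> x n = y n) -> Sq lo hi x = Sq lo hi y.
Proof. intros H. apply zsum_ext. intros. rewrite H; auto. Qed.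

Lemma quad_zero a K : 0 <= a -> (forall t, 0 <= 2 * t * a + t ^ 2 * K) -> a = 0.
Proof.
  intros Ha H. destruct (Req_dec a 0); auto. exfalso.
  set (t := - a / (Rabs K + 1)). specialize (H t).
  assert (HK : 0 < Rabs K + 1) by (pose proof (Rabs_pos K); lra).
  assert (Ht : t * (Rabs K + 1) = - a) by (unfold t; field; lra).
  pose proof (Rle_abs K). pose proof (Rabs_pos K).
  assert (t ^ 2 * K <= t ^ 2 * Rabs K) by (apply Rmult_le_compat_l; [nra| lra]).
  assert (t < 0). { unfold t. apply Rdiv_neg_pos; lra. }
  assert (Hx : 2 * t * a + t ^ 2 * Rabs K = t * (a - t)).
  { assert (Hq : t * Rabs K = - a - t) by lra. replace (t ^ 2 * Rabs K) with (t * (t * Rabs K)) by ring. rewrite Hq. ring. }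
  assert (0 < a) by lra. assert (t * (a - t) < 0) by nra. lra.
Qed.

Section Gap.
Variables (lo hi : Z) (A : (Z -> R) -> Z -> R) (mu g : R) (phi : Z -> R).
Hypothesis Hle : (lo <= hi)%Z.
Hypothesis Hlin : forall x y c n, A (fun m => x m + c * y m) n = A x n + c * A y n.
Hypothesis Hout : forall x n, ~ inI lo hi n -> A x n = 0.
Hypothesis Hsym : forall x y, inner lo hi x (A y) = inner lo hi (A x) y.
Hypothesis Hphis : supp lo hi phi.
Hypothesis Hphi1 : Sq lo hi phi = 1.
Hypothesis Hphie : forall n, A phi n = mu * phi n.
Hypothesis Hg : 0 < g.
Hypothesis Hgap : forall lam y, supp lo hi y -> (exists n, y n <> 0) -> inner lo hi y phi = 0 ->
  (forall n, A y n = lam * y n) -> g <= Rabs (lam - mu).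

Let T (x : Z -> R) : Z -> R := fun n => A x n - mu * x n.
Let N := card lo hi.
Let crd (x : Z -> R) (i : nat) := x (lo + Z.of_nat i)%Z.
Let e (i : nat) := deltaZ (lo + Z.of_nat i)%Z.

Lemma A0 n : A (fun _ => 0) n = 0.
Proof.
  pose proof (Hlin (fun _ => 0) (fun _ => 0) 1 n) as H. cbv beta in H.
  replace (fun m : Z => 0 + 1 * 0) with (fun _ : Z => 0) in H by (apply functional_extensionality; intros; ring).
  lra.
Qed.
Lemma Ascal c x n : A (fun m => c * x m) n = c * A x n.
Proof.
  pose proof (Hlin (fun _ => 0) x c n) as H. cbv beta in H.
  replace (fun m : Z => 0 + c * x m) with (fun m => c * x m) in H by (apply functional_extensionality; intros; ring).
  rewrite H, A0. ring.
Qed.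
Lemma Tlin x y c n : T (fun m => x m + c * y m) n = T x n + c * T y n.
Proof. unfold T. rewrite Hlin. ring. Qed.
Lemma Tscal c x n : T (fun m => c * x m) n = c * T x n.
Proof. unfold T. rewrite Ascal. ring. Qed.
Lemma Tsupp x : supp lo hi x -> supp lo hi (T x).
Proof. intros H n Hn. unfold T. rewrite Hout, H; auto; ring. Qed.
Lemma Tsym x y : inner lo hi x (T y) = inner lo hi (T x) y.
Proof.
  unfold T. rewrite (inner_ext_r _ _ x _ (fun n => A y n + (- mu) * y n)) by (intros; cbv beta; ring).
  rewrite (inner_ext_l lo hi (fun n => A x n - mu * x n) (fun n => A x n + (- mu) * x n)) by (intros; cbv beta; ring).
  rewrite inner_plus_r, inner_plus_l, Hsym. rewrite (inner_sym lo hi x y). ring.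
Qed.
Lemma Tphi n : T phi n = 0.
Proof. unfold T. rewrite Hphie. ring. Qed.

Lemma expand x : supp lo hi x -> forall n, x n = nsum N (fun i => crd x i * e i n).
Proof.
  intros Hx n. destruct (inb_spec lo hi n) as [[Hn _]|[Hn _]].
  - unfold inI in Hn. rewrite (nsum_single N _ (Z.to_nat (n - lo))).
    + unfold crd, e, deltaZ. replace (lo + Z.of_nat (Z.to_nat (n - lo)))%Z with n by lia. rewrite Z.eqb_refl. ring.
    + unfold N, card. lia.
    + intros i Hi Hne. unfold e, deltaZ. destruct (Z.eqb_spec n (lo + Z.of_nat i)); [lia| ring].
  - rewrite Hx by auto. rewrite (nsum_ext N _ (fun _ => 0)). rewrite nsum_zero; auto.
    intros i Hi. unfold e, deltaZ. destruct (Z.eqb_spec n (lo + Z.of_nat i)); [|ring].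
    exfalso. apply Hn. unfold inI, N, card in *. lia.
Qed.

Lemma Tsum (c : nat -> R) K m : T (fun n => nsum K (fun i => c i * e i n)) m = nsum K (fun i => c i * T (e i) m).
Proof.
  induction K.
  - simpl. unfold T. rewrite A0. ring.
  - simpl. rewrite <- IHK. rewrite <- Tlin. reflexivity.
Qed.

Lemma Texpand x : supp lo hi x -> forall m, T x m = nsum N (fun i => crd x i * T (e i) m).
Proof.
  intros Hx m. rewrite <- Tsum. f_equal. apply functional_extensionality. apply expand. auto.
Qed.

Let L (k i : nat) := T (e i) (lo + Z.of_nat k)%Z.

Lemma SqT x : supp lo hi x -> Sq lo hi (T x) = nsum N (fun k => Rmult (nsum N (fun i => Rmult (L k i) (crd x i))) (nsum N (fun i => Rmult (L k i) (crd x i)))).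
Proof.
  intros Hx. unfold Sq, zsum. fold N. apply nsum_ext. intros k Hk. rewrite Texpand by auto.
  unfold L. rewrite (nsum_ext N (fun i => crd x i * T (e i) (lo + Z.of_nat k)%Z) (fun i => T (e i) (lo + Z.of_nat k)%Z * crd x i)) by (intros; ring).
  ring.
Qed.
Lemma Sq_crd x : Sq lo hi x = nsum N (fun i => Rmult (crd x i) (crd x i)).
Proof. unfold Sq, zsum. fold N. apply nsum_ext. intros. unfold crd. ring. Qed.
Lemma inner_crd x : inner lo hi x phi = nsum N (fun i => Rmult (crd phi i) (crd x i)).
Proof. unfold inner, zsum. fold N. apply nsum_ext. intros. unfold crd. ring. Qed.

Lemma Sq_pos_nonzero x : Sq lo hi x <> 0 -> exists n, x n <> 0.
Proof.
  intros H. destruct (Classical_Prop.classic (exists n, x n <> 0)) as [?|Hn]; auto.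
  exfalso. apply H. unfold Sq. rewrite (zsum_ext _ _ _ (fun _ => 0)). apply zsum_zero.
  intros n _. destruct (Req_dec (x n) 0) as [E|E]. rewrite E; ring. exfalso; apply Hn; eauto.
Qed.

Lemma gap_main : forall x, supp lo hi x -> inner lo hi x phi = 0 ->
  g * vnorm lo hi x <= vnorm lo hi (T x).
Proof.
  intros x Hx Hxp.
  destruct (Req_dec (Sq lo hi x) 0) as [Hx0|Hx0].
  { unfold vnorm. fold (Sq lo hi x). rewrite Hx0, sqrt_0. rewrite Rmult_0_r. apply sqrt_pos. }
  assert (HxP : 0 < Sq lo hi x) by (pose proof (Sq_nonneg lo hi x); lra).
  set (cx := / sqrt (Sq lo hi x)).
  assert (Hcx : cx * cx * Sq lo hi x = 1).
  { unfold cx. rewrite <- Rinv_mult, sqrt_sqrt by lra. field. lra. }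
  destruct (Bridge.lsq_min N N L (crd phi)) as [c0 [Hc1 [Hc2 Hmin]]].
  { exists (crd (fun n => cx * x n)). split.
    - apply (eq_trans (y := cx * cx * Sq lo hi x)); [|exact Hcx].
      rewrite Sq_crd, <- nsum_scal. apply nsum_ext. intros. unfold crd. ring.
    - rewrite (nsum_ext N _ (fun i => cx * (crd phi i * crd x i))) by (intros; unfold crd; ring).
      rewrite nsum_scal, <- inner_crd, Hxp. simpl. ring. }
  set (z := fun n => if inb lo hi n then c0 (Z.to_nat (n - lo)) else 0).
  assert (Hzs : supp lo hi z). { intros n Hn. unfold z. rewrite inb_false; auto. }
  assert (Hcz : forall i, (i < N)%nat -> crd z i = c0 i).
  { intros i Hi. unfold crd, z. rewrite inb_true by (unfold inI, N, card in *; lia). f_equal. lia. }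
  assert (Hz1 : Sq lo hi z = 1).
  { rewrite Sq_crd. apply (eq_trans (y := nsum N (fun i : nat => (c0 i * c0 i)%R))); [|exact Hc1]. apply nsum_ext. intros. rewrite Hcz; auto. }
  assert (Hzp : inner lo hi z phi = 0).
  { rewrite inner_crd. apply (eq_trans (y := nsum N (fun i : nat => (crd phi i * c0 i)%R))); [|exact Hc2]. apply nsum_ext. intros. rewrite Hcz; auto. }
  set (m := Sq lo hi (T z)).
  assert (Hm0 : 0 <= m) by apply Sq_nonneg.
  assert (HM : forall y, supp lo hi y -> inner lo hi y phi = 0 -> m * Sq lo hi y <= Sq lo hi (T y)).
  { intros y Hy Hyp. destruct (Req_dec (Sq lo hi y) 0) as [Hy0|Hy0].
    { rewrite Hy0. rewrite Rmult_0_r. apply Sq_nonneg. }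
    assert (HyP : 0 < Sq lo hi y) by (pose proof (Sq_nonneg lo hi y); lra).
    set (cy := / sqrt (Sq lo hi y)).
    assert (Hcy : cy * cy * Sq lo hi y = 1).
    { unfold cy. rewrite <- Rinv_mult, sqrt_sqrt by lra. field. lra. }
    set (y' := fun n => cy * y n).
    assert (Hy's : supp lo hi y') by (intros n Hn; unfold y'; rewrite Hy; auto; ring).
    assert (Hmin' := Hmin (crd y')).
    assert (E1 : Sq lo hi (T z) = nsum N (fun k => nsum N (fun i => L k i * c0 i) * nsum N (fun i => L k i * c0 i))).
    { rewrite SqT by auto. apply nsum_ext. intros k _. rewrite !(nsum_ext N (fun i => L k i * crd z i) (fun i => L k i * c0 i)); auto.
      intros; rewrite Hcz; auto. }
    assert (E2 : Sq lo hi (T y') = cy * cy * Sq lo hi (T y)).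
    { unfold Sq. rewrite <- zsum_scal. apply zsum_ext. intros n _. unfold y'. rewrite Tscal. ring. }
    rewrite <- SqT in Hmin' by auto. fold m in E1. rewrite <- E1 in Hmin'.
    rewrite <- Sq_crd in Hmin'.
    assert (Sq lo hi y' = 1). { rewrite <- Hcy. unfold Sq. rewrite <- zsum_scal. apply zsum_ext. intros. unfold y'. ring. }
    assert (inner lo hi y' phi = 0).
    { unfold inner, y'. rewrite (zsum_ext _ _ _ (fun n => cy * (y n * phi n))) by (intros; ring).
      rewrite zsum_scal. fold (inner lo hi y phi). rewrite Hyp. ring. }
    rewrite inner_crd in H0. specialize (Hmin' H H0). rewrite E2 in Hmin'.
    assert (0 <= Sq lo hi (T y)) by apply Sq_nonneg. nra. }
  set (w := fun n => T (T z) n - m * z n).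
  assert (Hws : supp lo hi w) by (intros n Hn; unfold w; rewrite (Tsupp _ (Tsupp _ Hzs)), Hzs; auto; ring).
  assert (Hwp : inner lo hi w phi = 0).
  { unfold w. rewrite (inner_ext_l lo hi _ (fun n => T (T z) n + (-m) * z n)) by (intros; cbv beta; ring).
    rewrite inner_plus_l, Hzp. rewrite <- Tsym. rewrite (inner_zero_r _ _ _ (T phi)) by (intros; apply Tphi). ring. }
  assert (Hw0 : Sq lo hi w = 0).
  { apply (quad_zero (Sq lo hi w) (Sq lo hi (T w) - m * Sq lo hi w)); [apply Sq_nonneg|].
    intros t. set (yt := fun n => z n + t * w n).
    assert (Hyt : m * Sq lo hi yt <= Sq lo hi (T yt)).
    { apply HM. intros n Hn; unfold yt; rewrite Hzs, Hws; auto; ring. unfold yt. rewrite inner_plus_l, Hzp, Hwp. ring. }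
    assert (E1 : Sq lo hi (T yt) = Sq lo hi (fun n => T z n + t * T w n)). { apply Sq_ext. intros. unfold yt. apply Tlin. }
    rewrite E1, Sq_expand in Hyt. unfold yt in Hyt. rewrite Sq_expand in Hyt. rewrite Hz1 in Hyt.
    rewrite (Tsym (T z) w) in Hyt.
    assert (E2 : inner lo hi (T (T z)) w = Sq lo hi w + m * inner lo hi z w).
    { rewrite (inner_ext_l lo hi _ (fun n => w n + m * z n)) by (intros; unfold w; ring). rewrite inner_plus_l, inner_self. ring. }
    rewrite E2 in Hyt. fold m in Hyt. nra. }
  assert (HTTz : forall n, T (T z) n = m * z n).
  { intros n. destruct (inb_spec lo hi n) as [[Hn _]|[Hn _]].
    - pose proof (Sq_zero lo hi w Hw0 n Hn) as H. unfold w in H. lra.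
    - rewrite (Tsupp _ (Tsupp _ Hzs)), Hzs; auto; ring. }
  set (s := sqrt m).
  assert (Hss : s * s = m) by (apply sqrt_sqrt; auto).
  assert (Hs0 : 0 <= s) by apply sqrt_pos.
  set (y := fun n => T z n + s * z n).
  assert (HTy : forall n, T y n = s * y n). { intros n. unfold y. rewrite Tlin, HTTz. rewrite <- Hss. ring. }
  assert (Hgs : g <= s).
  { destruct (Classical_Prop.classic (exists n, y n <> 0)) as [Hy|Hy].
    - assert (Hgap' := Hgap (mu + s) y).
      replace (mu + s - mu) with s in Hgap' by ring. rewrite Rabs_pos_eq in Hgap' by auto. apply Hgap'.
      + intros n Hn. unfold y. rewrite (Tsupp _ Hzs), Hzs; auto; ring.
      + auto.
      + unfold y. rewrite inner_plus_l, Hzp, <- (Tsym z phi), (inner_zero_r _ _ z (T phi)) by (intros; apply Tphi). ring.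
      + intros n. pose proof (HTy n) as H. unfold T in H. lra.
    - assert (Hgap' := Hgap (mu - s) z).
      replace (mu - s - mu) with (- s) in Hgap' by ring. rewrite Rabs_Ropp, Rabs_pos_eq in Hgap' by auto. apply Hgap'; auto.
      + apply Sq_pos_nonzero. lra.
      + intros n. assert (H : y n = 0) by (destruct (Req_dec (y n) 0); auto; exfalso; apply Hy; eauto). unfold y, T in H. lra. }
  assert (Hgm : g * g <= m) by nra.
  pose proof (HM x Hx Hxp).
  unfold vnorm. fold (Sq lo hi x). fold (Sq lo hi (T x)).
  rewrite <- (sqrt_square g) by lra. rewrite <- sqrt_mult_alt by nra. apply sqrt_le_1_alt.
  pose proof (Sq_nonneg lo hi x). nra.
Qed.
End Gap.


Lemma dR_plus (f g : R -> R) (x df dg : R) : is_derive f x df -> is_derive g x dg -> is_derive (fun t => f t + g t) x (df + dg).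
Proof. intros. apply (is_derive_plus f g x df dg); auto. Qed.
Lemma dR_minus (f g : R -> R) (x df dg : R) : is_derive f x df -> is_derive g x dg -> is_derive (fun t => f t - g t) x (df - dg).
Proof. intros. apply (is_derive_minus f g x df dg); auto. Qed.
Lemma dR_mult (f g : R -> R) (x df dg : R) : is_derive f x df -> is_derive g x dg -> is_derive (fun t => f t * g t) x (df * g x + f x * dg).
Proof. intros. apply (is_derive_mult f g x df dg); auto. intros; apply Rmult_comm. Qed.
Lemma dR_scal (k : R) (f : R -> R) (x df : R) : is_derive f x df -> is_derive (fun t => k * f t) x (k * df).
Proof. apply is_derive_scal. Qed.
Lemma dR_const (a x : R) : is_derive (fun _ => a) x 0.
Proof. apply (is_derive_const a x). Qed.
Lemma dR_ext (f g : R -> R) (x l l' : R) : (forall t, f t = g t) -> l = l' -> is_derive f x l -> is_derive g x l'.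
Proof. intros H -> Hd. apply (is_derive_ext f g); auto. Qed.
Lemma dR_shift (f : R -> R) (c x : R) : ex_derive f (x + c) -> is_derive (fun t => f (t + c)) x (Derive f (x + c)).
Proof.
  intros H. apply Derive_correct in H.
  assert (Hg : is_derive (fun t => t + c) x 1).
  { apply (dR_ext (fun t => t + c) _ x (1 + 0)); auto; [ring|]. apply dR_plus. apply (is_derive_id x). apply dR_const. }
  pose proof (is_derive_comp f (fun t => t + c) x _ _ H Hg) as K.
  eapply dR_ext; [intros; reflexivity| |exact K]. simpl. unfold scal; simpl. unfold mult; simpl. ring.
Qed.

Lemma nsum_derive N (f : R -> nat -> R) df x : (forall k, is_derive (fun t => f t k) x (df k)) ->
  is_derive (fun t => nsum N (f t)) x (nsum N df).
Proof.
  induction N; intros H; simpl. apply dR_const.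
  apply dR_plus; auto.
Qed.
Lemma zsum_derive lo hi (f : R -> Z -> R) df x : (forall n, is_derive (fun t => f t n) x (df n)) ->
  is_derive (fun t => zsum lo hi (f t)) x (zsum lo hi df).
Proof. intros H. unfold zsum. apply nsum_derive. intros. apply H. Qed.

Lemma loc_ball c r th : Rabs (th - c) < r -> locally th (fun t => Rabs (t - c) < r).
Proof.
  intros H. assert (Hp : 0 < r - Rabs (th - c)) by lra.
  exists (mkposreal _ Hp). intros y Hy. simpl in Hy. unfold ball in Hy; simpl in Hy.
  unfold AbsRing_ball, abs, minus, plus, opp in Hy; simpl in Hy.
  replace (y - c) with ((y + - th) + (th - c)) by ring.
  eapply Rle_lt_trans. apply Rabs_triang. lra.
Qed.

Definition Hd (v : R -> R) (al : R) lo hi (t : R) (x : Z -> R) : Z -> R :=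
  fun n => if inb lo hi n then Derive v (t + IZR n * al) * restrict lo hi x n else 0.

Lemma restrict_derive lo hi (x : R -> Z -> R) dx t m : (forall k, is_derive (fun s => x s k) t (dx k)) ->
  is_derive (fun s => restrict lo hi (x s) m) t (restrict lo hi dx m).
Proof. intros H. unfold restrict. destruct (inb lo hi m); auto. apply dR_const. Qed.

Lemma Hres_derive v al ep lo hi (x : R -> Z -> R) dx t n : (forall y, ex_derive v y) ->
  (forall k, is_derive (fun s => x s k) t (dx k)) ->
  is_derive (fun s => Hres v al ep lo hi s (x s) n) t (Hres v al ep lo hi t dx n + Hd v al lo hi t (x t) n).
Proof.
  intros Hv H. unfold Hres, Hd. destruct (inb lo hi n).
  - unfold Vpot.
    eapply dR_ext; [intros; reflexivity| |].
    2:{ apply dR_plus. apply dR_scal. apply dR_plus; apply restrict_derive; exact H.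
        apply dR_mult. apply dR_shift. apply Hv. apply restrict_derive; exact H. }
    cbv beta iota. ring.
  - eapply dR_ext; [intros; reflexivity| |apply dR_const]. ring.
Qed.


Lemma inner_add_r lo hi x y z : inner lo hi x (fun n => y n + z n) = inner lo hi x y + inner lo hi x z.
Proof. unfold inner. rewrite <- zsum_plus. apply zsum_ext; intros; ring. Qed.
Lemma inner_sub_r lo hi x y z : inner lo hi x (fun n => y n - z n) = inner lo hi x y - inner lo hi x z.
Proof. unfold inner. rewrite <- zsum_minus. apply zsum_ext; intros; ring. Qed.
Lemma inner_scal_r lo hi x y c : inner lo hi x (fun n => c * y n) = c * inner lo hi x y.
Proof. unfold inner. rewrite <- zsum_scal. apply zsum_ext; intros; ring. Qed.
Lemma inner_add_l lo hi x y z : inner lo hi (fun n => y n + z n) x = inner lo hi y x + inner lo hi z x.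
Proof. unfold inner. rewrite <- zsum_plus. apply zsum_ext; intros; ring. Qed.
Lemma inner_sub_l lo hi x y z : inner lo hi (fun n => y n - z n) x = inner lo hi y x - inner lo hi z x.
Proof. unfold inner. rewrite <- zsum_minus. apply zsum_ext; intros; ring. Qed.
Lemma inner_scal_l lo hi x y c : inner lo hi (fun n => c * y n) x = c * inner lo hi y x.
Proof. unfold inner. rewrite <- zsum_scal. apply zsum_ext; intros; ring. Qed.

Section Rellich.
Variables (v : R -> R) (al ep : R) (lo hi : Z) (P : R -> Prop) (Ef : R -> R) (psi : R -> Z -> R).
Hypothesis Hle : (lo <= hi)%Z.
Hypothesis Hv : forall y, ex_derive v y.
Hypothesis HPo : forall t, P t -> locally t P.
Hypothesis RP : RellichPair (Hres v al ep lo hi) lo hi P Ef psi.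

Definition dpsi (psi : R -> Z -> R) t n := Derive (fun s => psi s n) t.

Lemma psi_derive t : P t -> forall n, is_derive (fun s => psi s n) t (dpsi psi t n).
Proof. intros Pt n. destruct RP as [_ [C2 _]]. apply Derive_correct. apply (C2 n t Pt). Qed.
Lemma Ef_derive t : P t -> is_derive Ef t (Derive Ef t).
Proof. intros Pt. destruct RP as [C2 _]. apply Derive_correct. apply (C2 t Pt). Qed.
Lemma psi_supp t : P t -> supp lo hi (psi t).
Proof. intros Pt. destruct RP as [_ [_ H]]. apply H; auto. Qed.
Lemma psi_Sq t : P t -> Sq lo hi (psi t) = 1.
Proof. intros Pt. destruct RP as [_ [_ H]]. apply vnorm_1. apply H; auto. Qed.
Lemma psi_eig t : P t -> forall n, Hres v al ep lo hi t (psi t) n = Ef t * psi t n.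
Proof. intros Pt. destruct RP as [_ [_ H]]. apply H; auto. Qed.
Lemma psi_simple t : P t -> forall x, supp lo hi x -> (forall n, Hres v al ep lo hi t x n = Ef t * x n) ->
  exists c, forall n, x n = c * psi t n.
Proof. intros Pt. destruct RP as [_ [_ H]]. apply H; auto. Qed.

Lemma dpsi_supp t : P t -> supp lo hi (dpsi psi t).
Proof.
  intros Pt n Hn. unfold dpsi. rewrite (Derive_ext_loc _ (fun _ => 0)). apply Derive_const.
  apply (filter_imp P). intros s Ps. apply psi_supp; auto. apply HPo; auto.
Qed.

Lemma inner_psi_dpsi t : P t -> inner lo hi (psi t) (dpsi psi t) = 0.
Proof.
  intros Pt.
  assert (H1 : is_derive (fun s => Sq lo hi (psi s)) t (zsum lo hi (fun n => 2 * (psi t n * dpsi psi t n)))).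
  { unfold Sq. apply zsum_derive. intros n.
    eapply (dR_ext (fun s => psi s n * psi s n)); [intros; cbv beta; ring| |apply dR_mult; apply psi_derive; auto].
    cbv beta; ring. }
  assert (H2 : is_derive (fun s => Sq lo hi (psi s)) t 0).
  { apply (is_derive_ext_loc (fun _ => 1)). apply (filter_imp P). intros s Ps. rewrite psi_Sq; auto. apply HPo; auto.
    apply dR_const. }
  apply is_derive_unique in H1. apply is_derive_unique in H2. rewrite H1 in H2.
  rewrite zsum_scal in H2. unfold inner. lra.
Qed.

Lemma eig_derive t : P t -> forall n,
  Hres v al ep lo hi t (dpsi psi t) n + Hd v al lo hi t (psi t) n = Derive Ef t * psi t n + Ef t * dpsi psi t n.
Proof.
  intros Pt n.
  assert (H1 := Hres_derive v al ep lo hi psi (dpsi psi t) t n Hv (psi_derive t Pt)).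
  assert (H2 : is_derive (fun s => Ef s * psi s n) t (Derive Ef t * psi t n + Ef t * dpsi psi t n)).
  { apply dR_mult. apply Ef_derive; auto. apply psi_derive; auto. }
  apply (is_derive_ext_loc _ (fun s => Ef s * psi s n)) in H1.
  - apply is_derive_unique in H1. apply is_derive_unique in H2. congruence.
  - apply (filter_imp P). intros s Ps. apply psi_eig; auto. apply HPo; auto.
Qed.

Lemma HF t : P t -> Derive Ef t = inner lo hi (psi t) (Hd v al lo hi t (psi t)).
Proof.
  intros Pt.
  assert (E : inner lo hi (psi t) (fun n => Hres v al ep lo hi t (dpsi psi t) n + Hd v al lo hi t (psi t) n)
            = inner lo hi (psi t) (fun n => Derive Ef t * psi t n + Ef t * dpsi psi t n)).
  { apply inner_ext_r. intros. apply eig_derive; auto. }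
  rewrite !inner_add_r, !inner_scal_r in E.
  rewrite Hres_sym in E by auto.
  rewrite (inner_ext_l lo hi _ (fun n => Ef t * psi t n)) in E by (intros; apply psi_eig; auto).
  rewrite inner_scal_l, inner_psi_dpsi, inner_self, psi_Sq in E by auto. lra.
Qed.
End Rellich.


Lemma Hres_zero v al ep lo hi t x n : (forall m, inI lo hi m -> x m = 0) -> Hres v al ep lo hi t x n = 0.
Proof.
  intros H. unfold Hres, restrict.
  destruct (inb_spec lo hi (n+1)) as [[? ->]|[? ->]], (inb_spec lo hi (n-1)) as [[? ->]|[? ->]],
    (inb_spec lo hi n) as [[? ->]|[? ->]]; rewrite ?H; auto; ring.
Qed.
Lemma supp_mono a b c d x : (a <= b)%Z -> (c <= d)%Z -> supp b c x -> supp a d x.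
Proof. intros H1 H2 H n Hn. apply H. unfold inI in *. lia. Qed.
Lemma HP_J v al ep a b c d t x n : (a < b)%Z -> (b <= c)%Z -> (c < d)%Z -> supp b c x ->
  HP v al ep a b c d t x n = Hres v al ep b c t x n.
Proof.
  intros H1 H2 H3 Hx. unfold HP.
  rewrite (Hres_zero v al ep a (b-1)), (Hres_zero v al ep (c+1) d). ring.
  all: intros m Hm; apply Hx; unfold inI in *; lia.
Qed.
Lemma Hres_sub v al ep lo hi t x y n : Hres v al ep lo hi t (fun m => x m - y m) n = Hres v al ep lo hi t x n - Hres v al ep lo hi t y n.
Proof.
  replace (fun m => x m - y m) with (fun m => x m + (-1) * y m) by (apply functional_extensionality; intros; ring).
  rewrite Hres_lin. ring.
Qed.
Lemma zsum_J a b c d f : (a < b)%Z -> (b <= c)%Z -> (c < d)%Z ->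
  (forall n, ~ inI b c n -> f n = 0) -> zsum a d f = zsum b c f.
Proof. intros. apply zsum_sub; try lia. intros; auto. Qed.
Lemma vnorm_J a b c d x : (a < b)%Z -> (b <= c)%Z -> (c < d)%Z -> supp b c x -> vnorm a d x = vnorm b c x.
Proof. intros. unfold vnorm. f_equal. apply zsum_J; auto. intros n Hn. rewrite H2; auto. ring. Qed.
Lemma Sq_J a b c d x : (a < b)%Z -> (b <= c)%Z -> (c < d)%Z -> supp b c x -> Sq a d x = Sq b c x.
Proof. intros. unfold Sq. apply zsum_J; auto. intros n Hn. rewrite H2; auto. ring. Qed.
Lemma inner_J a b c d x y : (a < b)%Z -> (b <= c)%Z -> (c < d)%Z -> supp b c x -> inner a d x y = inner b c x y.
Proof. intros. unfold inner. apply zsum_J; auto. intros n Hn. rewrite H2; auto. ring. Qed.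

Lemma Hd_in v al lo hi t x n : inI lo hi n -> Hd v al lo hi t x n = Derive v (t + IZR n * al) * x n.
Proof. intros H. unfold Hd. rewrite inb_true, restrict_in; auto. Qed.
Lemma Hd_out v al lo hi t x n : ~ inI lo hi n -> Hd v al lo hi t x n = 0.
Proof. intros H. unfold Hd. rewrite inb_false; auto. Qed.
Lemma Hd_J v al a b c d t x n : (a < b)%Z -> (b <= c)%Z -> (c < d)%Z -> supp b c x ->
  Hd v al b c t x n = Hd v al a d t x n.
Proof.
  intros H1 H2 H3 Hx. destruct (inb_spec b c n) as [[Hn _]|[Hn _]].
  - rewrite !Hd_in; auto. unfold inI in *; lia.
  - rewrite Hd_out by auto. unfold Hd, restrict. destruct (inb a d n); [|auto]. destruct (inb a d n); rewrite ?Hx; auto; ring.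
Qed.
Lemma vnorm_Hd v al lo hi t x D0 : 0 <= D0 -> (forall y, Rabs (Derive v y) <= D0) ->
  vnorm lo hi (Hd v al lo hi t x) <= D0 * vnorm lo hi x.
Proof.
  intros H0 H. rewrite (vnorm_ext lo hi _ (fun n => Derive v (t + IZR n * al) * x n)) by (intros; apply Hd_in; auto).
  apply vnorm_mult_bound; auto.
Qed.
Lemma vnorm_Hd_sub v al lo hi t x y D0 : 0 <= D0 -> (forall y, Rabs (Derive v y) <= D0) ->
  vnorm lo hi (fun n => Hd v al lo hi t x n - Hd v al lo hi t y n) <= D0 * vnorm lo hi (fun n => x n - y n).
Proof.
  intros H0 H. rewrite (vnorm_ext lo hi _ (fun n => Derive v (t + IZR n * al) * (x n - y n))).
  apply vnorm_mult_bound; auto.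
  intros n Hn. rewrite !Hd_in; auto. ring.
Qed.
Lemma vnorm_sub_le lo hi x y : vnorm lo hi (fun n => x n - y n) <= vnorm lo hi x + vnorm lo hi y.
Proof.
  replace (fun n => x n - y n) with (fun n => x n + (-1 * y n)) by (apply functional_extensionality; intros; ring).
  eapply Rle_trans. apply vnorm_triang. rewrite vnorm_scal. assert (Rabs (-1) = 1) by (rewrite Rabs_left; lra). rewrite H. lra.
Qed.
Lemma vnorm_add_le lo hi x y : vnorm lo hi (fun n => x n + y n) <= vnorm lo hi x + vnorm lo hi y.
Proof. apply vnorm_triang. Qed.
Lemma inner_abs_le lo hi x y A B : vnorm lo hi x <= A -> vnorm lo hi y <= B -> Rabs (inner lo hi x y) <= A * B.
Proof.
  intros H1 H2. eapply Rle_trans. apply CS. apply Rmult_le_compat; auto; apply vnorm_nonneg.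
Qed.
Lemma vnorm_scal_le lo hi c x A B : Rabs c <= A -> vnorm lo hi x <= B -> vnorm lo hi (fun n => c * x n) <= A * B.
Proof. intros. rewrite vnorm_scal. apply Rmult_le_compat; auto. apply Rabs_pos. apply vnorm_nonneg. Qed.
Lemma vnorm_of_Sq1 lo hi x : Sq lo hi x = 1 -> vnorm lo hi x = 1.
Proof. intros H. unfold vnorm. fold (Sq lo hi x). rewrite H. apply sqrt_1. Qed.


Theorem proposition2p2 :
  forall D0 : R, 0 < D0 ->
  exists C : R,
  forall (v : R -> R) (alpha eps : R) (thetas Es : R)
         (a b c d : Z) (delta rho gamma ell : R)
         (Ef : R -> R) (psi : R -> Z -> R)
         (Eh : R -> R) (psih : R -> Z -> R),
  (* the potential v in C^2(T,[-1,1]) (T = R/Z), ||v'|| + ||v''|| <= D0 *)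
  (forall x, v (x + 1) = v x) ->
  (forall x, -1 <= v x <= 1) ->
  (forall x, ex_derive v x /\ ex_derive (Derive v) x /\ continuous (Derive (Derive v)) x) ->
  (forall x y, Rabs (Derive v x) + Rabs (Derive (Derive v) y) <= D0) ->
  (* alpha irrational *)
  (forall p q : Z, q <> 0%Z -> alpha <> IZR p / IZR q) ->
  0 < eps < 1 / 7 ->
  -2 <= Es <= 2 ->
  (* hatLambda = [a,d], core Lambda = [b,c], shoulders [a,b-1], [c+1,d] *)
  (a < b)%Z -> (b <= c)%Z -> (c < d)%Z ->
  0 < rho -> delta < rho ^ 3 / 2 -> rho ^ 3 / 2 < rho / 16 ->
  ln 7 < gamma -> gamma <= Rabs (ln eps) -> 0 < ell ->
  let ball := fun t => Rabs (t - thetas) < rho / (8 * D0) in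
  let H := Hres v alpha eps in
  (* (1) *)
  RellichPair (H b c) b c ball Ef psi -> Ef thetas = Es ->
  (forall theta, ball theta ->
    (* (2) *)
    vnorm a d (GammaP v alpha eps a b c d theta (psi theta)) <= 2 * delta /\
    (forall lam x, supp a d x -> vnorm a d x = 1 ->
       (forall n, H a d theta x n = lam * x n) -> Rabs (lam - Es) < 3 * rho / 2 ->
       vnorm a d (GammaP v alpha eps a b c d theta x) <= 4 * delta) /\
    (* (3) *)
    (forall E, Rabs (E - Es) < 3 * rho / 2 ->
       green_decay v alpha eps a (b - 1) theta E gamma ell /\
       green_decay v alpha eps (c + 1) d theta E gamma ell) /\
    (* (4) *)
    is_eigval (HP v alpha eps a b c d theta) a d (Ef theta) /\
    (forall lam, is_eigval (HP v alpha eps a b c d theta) a d lam ->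
       Rabs (lam - Es) < 7 * rho / 4 -> lam = Ef theta) /\
    (forall E, Rabs (E - Es) < 3 * rho / 2 ->
       Rperp_norm_le (HP v alpha eps a b c d theta) a d (Ef theta) E (4 / rho)) /\
    (* (5) *)
    vnorm a d (GammaP v alpha eps a b c d theta
                 (fun n => Derive (fun t => psi t n) theta)) <= 25 * D0 * delta / rho) ->
  (* (hatE, hatpsi): the Rellich pair of H^{hatLambda} on the ball whose eigenvalue is
     the unique eigenvalue of H^{hatLambda}(theta) in B_{3rho/2}(Es), with sign chosen
     so that ||hatpsi - psi|| <= 3 delta / rho *)
  RellichPair (H a d) a d ball Eh psih ->
  (forall theta, ball theta ->
     Rabs (Eh theta - Es) < 3 * rho / 2 /\
     (forall lam, is_eigval (H a d theta) a d lam -> Rabs (lam - Es) < 3 * rho / 2 ->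
        lam = Eh theta) /\
     vnorm a d (fun n => psih theta n - psi theta n) <= 3 * delta / rho) ->
  forall theta, ball theta ->
    Rabs (Eh theta - Ef theta) <= C * delta /\
    Rabs (Derive (fun t => Eh t - Ef t) theta) <= C * delta / rho /\
    Rabs (Derive (Derive (fun t => Eh t - Ef t)) theta) <= C * delta / rho ^ 2 /\
    vnorm a d (fun n => psih theta n - psi theta n) <= C * delta / rho /\
    vnorm a d (fun n => Derive (fun t => psih t n - psi t n) theta) <= C * delta / rho ^ 2.
Proof.
  intros D0 HD0. exists (200 * (1 + D0) ^ 2).
  intros v alpha eps thetas Es a b c d delta rho gamma ell Ef psi Eh psih
    Hper Hvb Hvd HD Hirr Heps HEs Hab Hbc Hcd Hrho Hdel Hrho3 Hg1 Hg2 Hell ball H RPJ HEf0 Hyp RPI Hhat theta Hth.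
  unfold H in *. clear H.
  assert (Hv : forall y, ex_derive v y) by (intros; apply Hvd).
  assert (Hv2 : forall y, ex_derive (Derive v) y) by (intros; apply Hvd).
  assert (HD1 : forall y, Rabs (Derive v y) <= D0) by (intros y; pose proof (HD y 0); pose proof (Rabs_pos (Derive (Derive v) 0)); lra).
  assert (HD2 : forall y, Rabs (Derive (Derive v) y) <= D0) by (intros y; pose proof (HD 0 y); pose proof (Rabs_pos (Derive v 0)); lra).
  assert (Hball : forall t, ball t -> locally t ball) by (intros t Ht; exact (loc_ball thetas (rho / (8 * D0)) t Ht)).
  assert (Had : (a <= d)%Z) by lia.
  assert (Hbc' : (b <= c)%Z) by lia.
  destruct (Hyp theta Hth) as [G2a [G2b [G3 [G4a [G4b [G4c G5]]]]]].
  destruct (Hhat theta Hth) as [HhE [Hhuniq Hhdist]].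
  assert (Hdel0 : 0 <= delta) by (pose proof (vnorm_nonneg a d (GammaP v alpha eps a b c d theta (psi theta))); lra).
  assert (Hr1 : rho * rho < 1 / 8) by nra.
  assert (Hr2 : rho < 1) by nra.
  assert (Hdr : delta < rho / 16) by lra.
  assert (Hdr2 : delta / rho < rho * rho / 2).
  { assert (Hq : delta / rho * rho = delta) by (field; lra). apply (Rmult_lt_reg_r rho); auto. rewrite Hq. simpl in Hdel. nra. }
  assert (psJs : supp b c (psi theta)) by exact (psi_supp _ _ _ _ _ _ _ _ RPJ theta Hth).
  assert (psIs : supp a d (psi theta)) by (apply (supp_mono a b c d); auto; lia).
  assert (psSqJ : Sq b c (psi theta) = 1) by exact (psi_Sq _ _ _ _ _ _ _ _ RPJ theta Hth).
  assert (psSqI : Sq a d (psi theta) = 1) by (rewrite (Sq_J a b c d); auto).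
  assert (phIs : supp a d (psih theta)) by exact (psi_supp _ _ _ _ _ _ _ _ RPI theta Hth).
  assert (phSq : Sq a d (psih theta) = 1) by exact (psi_Sq _ _ _ _ _ _ _ _ RPI theta Hth).
  assert (dpsJs : supp b c (dpsi psi theta)) by exact (dpsi_supp _ _ _ _ _ _ _ _ Hball RPJ theta Hth).
  assert (dpsIs : supp a d (dpsi psi theta)) by (apply (supp_mono a b c d); auto; lia).
  assert (dphIs : supp a d (dpsi psih theta)) by exact (dpsi_supp _ _ _ _ _ _ _ _ Hball RPI theta Hth).
  assert (ipsdps : inner b c (psi theta) (dpsi psi theta) = 0) by exact (inner_psi_dpsi _ _ _ _ _ _ _ _ Hball RPJ theta Hth).
  assert (iphdph : inner a d (psih theta) (dpsi psih theta) = 0) by exact (inner_psi_dpsi _ _ _ _ _ _ _ _ Hball RPI theta Hth).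
  assert (eigJ := eig_derive _ _ _ _ _ _ _ _ Hv Hball RPJ theta Hth).
  assert (eigI := eig_derive _ _ _ _ _ _ _ _ Hv Hball RPI theta Hth).
  assert (HFJ := HF _ _ _ _ _ _ _ _ Hbc' Hv Hball RPJ).
  assert (HFI := HF _ _ _ _ _ _ _ _ Had Hv Hball RPI).
  assert (Epsi : forall n, Hres v alpha eps b c theta (psi theta) n = Ef theta * psi theta n) by exact (psi_eig _ _ _ _ _ _ _ _ RPJ theta Hth).
  assert (Ephi : forall n, Hres v alpha eps a d theta (psih theta) n = Eh theta * psih theta n) by exact (psi_eig _ _ _ _ _ _ _ _ RPI theta Hth).
  assert (HE'b : forall t, ball t -> Rabs (Derive Ef t) <= D0).
  { intros t Ht. rewrite (HFJ t Ht).
    assert (H1 : vnorm b c (psi t) = 1) by (apply vnorm_of_Sq1; exact (psi_Sq _ _ _ _ _ _ _ _ RPJ t Ht)).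
    assert (H2 : vnorm b c (Hd v alpha b c t (psi t)) <= D0).
    { pose proof (vnorm_Hd v alpha b c t (psi t) D0 (Rlt_le _ _ HD0) HD1). rewrite H1 in H. lra. }
    eapply Rle_trans. apply (inner_abs_le b c _ _ 1 D0); lra. lra. }
  assert (Hmm : forall x, Rmin thetas theta <= x <= Rmax thetas theta -> ball x).
  { intros x Hx. unfold ball. unfold ball in Hth. unfold Rmin, Rmax in Hx.
    destruct (Rle_dec thetas theta); split_Rabs; lra. }
  assert (HEs' : Rabs (Ef theta - Es) < rho / 8).
  { rewrite <- HEf0.
    destruct (MVT_gen Ef thetas theta (Derive Ef)) as [cc [Hcc Hmvt]].
    - intros x Hx. apply (Ef_derive _ _ _ _ _ _ _ _ RPJ x). apply Hmm. lra.
    - intros x Hx. apply derivable_continuous_pt. apply ex_derive_Reals_0.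
      exists (Derive Ef x). apply (Ef_derive _ _ _ _ _ _ _ _ RPJ x). apply Hmm; auto.
    - rewrite Hmvt. rewrite Rabs_mult. pose proof (HE'b cc (Hmm cc Hcc)).
      unfold ball in Hth. pose proof (Rabs_pos (theta - thetas)). pose proof (Rabs_pos (Derive Ef cc)).
      assert (Rabs (theta - thetas) * (8 * D0) < rho).
      { apply (Rmult_lt_compat_r (8 * D0)) in Hth; [|lra]. replace (rho / (8 * D0) * (8 * D0)) with rho in Hth by (field; lra). exact Hth. }
      nra. }
  assert (H3r : 3 * delta / rho < 3 / 16).
  { replace (3 * delta / rho) with (3 * (delta / rho)) by (field; lra). nra. }
  assert (phn : vnorm a d (psih theta) = 1) by (apply vnorm_of_Sq1; auto).
  assert (psnI : vnorm a d (psi theta) = 1) by (apply vnorm_of_Sq1; auto).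
  assert (psnJ : vnorm b c (psi theta) = 1) by (apply vnorm_of_Sq1; auto).
  set (ip := inner a d (psih theta) (psi theta)).
  assert (Hip : ip >= 1 / 2).
  { pose proof (Sq_expand a d (psih theta) (psi theta) (-1)) as E.
    replace (fun n => psih theta n + -1 * psi theta n) with (fun n => psih theta n - psi theta n) in E by (apply functional_extensionality; intros; ring).
    rewrite <- vnorm_sq in E. rewrite phSq, psSqI in E. fold ip in E.
    pose proof (vnorm_nonneg a d (fun n => psih theta n - psi theta n)). nra. }
  assert (F7 : (Eh theta - Ef theta) * ip = inner a d (psih theta) (GammaP v alpha eps a b c d theta (psi theta))).
  { assert (E1 : inner a d (Hres v alpha eps a d theta (psih theta)) (psi theta) = Eh theta * ip).
    { rewrite (inner_ext_l a d _ (fun n => Eh theta * psih theta n)) by (intros; apply Ephi). apply inner_scal_l. }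
    rewrite <- Hres_sym in E1 by auto.
    rewrite (inner_ext_r a d _ _ (fun n => Ef theta * psi theta n + GammaP v alpha eps a b c d theta (psi theta) n)) in E1.
    2:{ intros n Hn. unfold GammaP. rewrite HP_J by auto. rewrite Epsi. ring. }
    rewrite inner_add_r, inner_scal_r in E1. fold ip in E1. lra. }
  assert (HEE : Rabs (Eh theta - Ef theta) <= 4 * delta).
  { assert (Hq : Rabs (inner a d (psih theta) (GammaP v alpha eps a b c d theta (psi theta))) <= 1 * (2 * delta)).
    { apply inner_abs_le; lra. }
    rewrite <- F7, Rabs_mult, (Rabs_pos_eq ip) in Hq by lra.
    pose proof (Rabs_pos (Eh theta - Ef theta)). nra. }
  assert (HgapJ : forall lam y, supp b c y -> (exists n, y n <> 0) -> inner b c y (psi theta) = 0 ->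
     (forall n, Hres v alpha eps b c theta y n = lam * y n) -> rho <= Rabs (lam - Ef theta)).
  { intros lam y Hys Hynz Hyp0 Hye.
    destruct (Rlt_le_dec (Rabs (lam - Es)) (7 * rho / 4)) as [Hl|Hl].
    - exfalso. assert (Hlam : lam = Ef theta).
      { apply G4b; auto. exists y. split; [apply (supp_mono a b c d); auto; lia|]. split; auto. intros n. rewrite HP_J; auto. }
      subst lam. destruct (psi_simple _ _ _ _ _ _ _ _ RPJ theta Hth y Hys Hye) as [k Hk].
      rewrite (inner_ext_l b c _ (fun n => k * psi theta n)) in Hyp0 by (intros; apply Hk).
      rewrite inner_scal_l, inner_self, psSqJ in Hyp0. destruct Hynz as [n Hn]. apply Hn. rewrite Hk. replace k with 0 by lra. ring.
    - revert Hl HEs'. split_Rabs; lra. }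
  assert (Hdps : vnorm b c (dpsi psi theta) <= 2 * D0 / rho).
  { assert (Hperp : inner b c (dpsi psi theta) (psi theta) = 0) by (rewrite inner_sym; auto).
    pose proof (gap_main b c (Hres v alpha eps b c theta) (Ef theta) rho (psi theta) Hbc'
      (fun x y k n => Hres_lin v alpha eps b c theta x y k n) (fun x n => Hres_out v alpha eps b c theta x n)
      (fun x y => Hres_sym v alpha eps b c theta x y Hbc') Epsi Hrho HgapJ (dpsi psi theta) dpsJs Hperp) as G.
    cbv beta in G.     rewrite (vnorm_ext b c (fun n => Hres v alpha eps b c theta (dpsi psi theta) n - Ef theta * dpsi psi theta n) (fun n => Derive Ef theta * psi theta n - Hd v alpha b c theta (psi theta) n)) in G.
    2:{ intros n _. pose proof (eigJ n). cbv beta. lra. }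
    assert (Hb : vnorm b c (fun n => Derive Ef theta * psi theta n - Hd v alpha b c theta (psi theta) n) <= D0 * 1 + D0 * 1).
    { eapply Rle_trans. apply vnorm_sub_le. apply Rplus_le_compat.
      apply vnorm_scal_le; [apply HE'b; auto | lra].
      pose proof (vnorm_Hd v alpha b c theta (psi theta) D0 (Rlt_le _ _ HD0) HD1) as HH. rewrite psnJ in HH. lra. }
    apply (Rmult_le_reg_l rho); auto. replace (rho * (2 * D0 / rho)) with (2 * D0) by (field; lra). lra. }
  assert (HdpsI : vnorm a d (dpsi psi theta) <= 2 * D0 / rho) by (rewrite (vnorm_J a b c d); auto).
  assert (HEhEs : Rabs (Eh theta - Es) < rho / 2) by (revert HEE HEs'; split_Rabs; lra).
  assert (HgapI : forall lam y, supp a d y -> (exists n, y n <> 0) -> inner a d y (psih theta) = 0 ->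
     (forall n, Hres v alpha eps a d theta y n = lam * y n) -> rho <= Rabs (lam - Eh theta)).
  { intros lam y Hys Hynz Hyp0 Hye.
    destruct (Rlt_le_dec (Rabs (lam - Es)) (3 * rho / 2)) as [Hl|Hl].
    - exfalso. assert (Hlam : lam = Eh theta).
      { apply Hhuniq; auto. exists y. split; auto. }
      subst lam. destruct (psi_simple _ _ _ _ _ _ _ _ RPI theta Hth y Hys Hye) as [k Hk].
      rewrite (inner_ext_l a d _ (fun n => k * psih theta n)) in Hyp0 by (intros; apply Hk).
      rewrite inner_scal_l, inner_self, phSq in Hyp0. destruct Hynz as [n Hn]. apply Hn. rewrite Hk. replace k with 0 by lra. ring.
    - revert Hl HEhEs. split_Rabs; lra. }
  assert (HE'I : Derive Ef theta = inner a d (psi theta) (Hd v alpha a d theta (psi theta))).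
  { rewrite (HFJ theta Hth). rewrite <- (inner_J a b c d) by auto. apply inner_ext_r. intros; apply Hd_J; auto. }
  assert (HEh' : Derive Eh theta = inner a d (psih theta) (Hd v alpha a d theta (psih theta))) by exact (HFI theta Hth).
  assert (HHdph : vnorm a d (Hd v alpha a d theta (psih theta)) <= D0).
  { pose proof (vnorm_Hd v alpha a d theta (psih theta) D0 (Rlt_le _ _ HD0) HD1) as HH. rewrite phn in HH. lra. }
  assert (HHdd : vnorm a d (fun n => Hd v alpha a d theta (psih theta) n - Hd v alpha a d theta (psi theta) n) <= D0 * (3 * delta / rho)).
  { eapply Rle_trans. apply (vnorm_Hd_sub v alpha a d theta (psih theta) (psi theta) D0 (Rlt_le _ _ HD0) HD1).
    apply Rmult_le_compat_l; lra. }
  assert (HdE' : Rabs (Derive Eh theta - Derive Ef theta) <= 6 * D0 * delta / rho).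
  { rewrite HEh', HE'I.
    assert (E : inner a d (psih theta) (Hd v alpha a d theta (psih theta)) - inner a d (psi theta) (Hd v alpha a d theta (psi theta))
      = inner a d (fun n => psih theta n - psi theta n) (Hd v alpha a d theta (psih theta))
        + inner a d (psi theta) (fun n => Hd v alpha a d theta (psih theta) n - Hd v alpha a d theta (psi theta) n)).
    { rewrite inner_sub_l, inner_sub_r. ring. }
    rewrite E. eapply Rle_trans. apply Rabs_triang.
    pose proof (inner_abs_le a d _ _ (3 * delta / rho) D0 Hhdist HHdph).
    pose proof (inner_abs_le a d _ _ 1 (D0 * (3 * delta / rho)) (Req_le _ _ psnI) HHdd).
    replace (6 * D0 * delta / rho) with (3 * delta / rho * D0 + 1 * (D0 * (3 * delta / rho))) by (field; lra). lra. }
  set (u := fun n => dpsi psih theta n - dpsi psi theta n).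
  assert (uS : supp a d u) by (intros n Hn; unfold u; rewrite dphIs, dpsIs; auto; ring).
  set (beta := inner a d u (psih theta)).
  assert (Hbeta : Rabs beta <= 2 * D0 / rho * (3 * delta / rho)).
  { unfold beta, u. rewrite inner_sub_l. rewrite (inner_sym a d (dpsi psih theta)), iphdph.
    assert (E1 : inner a d (dpsi psi theta) (psih theta) = inner a d (dpsi psi theta) (fun n => psih theta n - psi theta n) + inner a d (dpsi psi theta) (psi theta)) by (rewrite inner_sub_r; ring).
    assert (E2 : inner a d (dpsi psi theta) (psi theta) = 0) by (rewrite (inner_J a b c d) by auto; rewrite inner_sym; auto).
    rewrite E1, E2. replace (0 - (inner a d (dpsi psi theta) (fun n => psih theta n - psi theta n) + 0)) with (- inner a d (dpsi psi theta) (fun n => psih theta n - psi theta n)) by ring.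
    rewrite Rabs_Ropp. apply inner_abs_le; auto. }
  set (w := fun n => u n + (- beta) * psih theta n).
  assert (wS : supp a d w) by (intros n Hn; unfold w; rewrite uS, phIs; auto; ring).
  assert (wp : inner a d w (psih theta) = 0).
  { unfold w. rewrite inner_plus_l, inner_self, phSq. fold beta. ring. }
  assert (Gw := gap_main a d (Hres v alpha eps a d theta) (Eh theta) rho (psih theta) Had
      (fun x y k n => Hres_lin v alpha eps a d theta x y k n) (fun x n => Hres_out v alpha eps a d theta x n)
      (fun x y => Hres_sym v alpha eps a d theta x y Had) Ephi Hrho HgapI w wS wp).
  cbv beta in Gw.
  rewrite (vnorm_ext a d (fun n => Hres v alpha eps a d theta w n - Eh theta * w n)
     (fun n => (Derive Eh theta - Derive Ef theta) * psih theta n + Derive Ef theta * (psih theta n - psi theta n)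
        - (Hd v alpha a d theta (psih theta) n - Hd v alpha a d theta (psi theta) n)
        - GammaP v alpha eps a b c d theta (dpsi psi theta) n + (Eh theta - Ef theta) * dpsi psi theta n)) in Gw.
  2:{ intros n _. unfold w, u. rewrite Hres_lin, Hres_sub. pose proof (eigI n). pose proof (eigJ n). rewrite (Ephi n).
      assert (Hres v alpha eps a d theta (dpsi psi theta) n = Hres v alpha eps b c theta (dpsi psi theta) n + GammaP v alpha eps a b c d theta (dpsi psi theta) n)
        by (unfold GammaP; rewrite HP_J; auto; ring).
      pose proof (Hd_J v alpha a b c d theta (psi theta) n Hab Hbc Hcd psJs). lra. }
  assert (B1 : vnorm a d (fun n => (Derive Eh theta - Derive Ef theta) * psih theta n) <= 6 * D0 * delta / rho * 1)
    by (apply vnorm_scal_le; auto; lra).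
  assert (B2 : vnorm a d (fun n => Derive Ef theta * (psih theta n - psi theta n)) <= D0 * (3 * delta / rho))
    by (apply vnorm_scal_le; [apply HE'b; auto| auto]).
  assert (B4 : vnorm a d (GammaP v alpha eps a b c d theta (dpsi psi theta)) <= 25 * D0 * delta / rho) by exact G5.
  assert (B5 : vnorm a d (fun n => (Eh theta - Ef theta) * dpsi psi theta n) <= 4 * delta * (2 * D0 / rho))
    by (apply vnorm_scal_le; auto).
  assert (Hr : vnorm a d (fun n => (Derive Eh theta - Derive Ef theta) * psih theta n + Derive Ef theta * (psih theta n - psi theta n)
        - (Hd v alpha a d theta (psih theta) n - Hd v alpha a d theta (psi theta) n)
        - GammaP v alpha eps a b c d theta (dpsi psi theta) n + (Eh theta - Ef theta) * dpsi psi theta n)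
     <= 6 * D0 * delta / rho * 1 + D0 * (3 * delta / rho) + D0 * (3 * delta / rho) + 25 * D0 * delta / rho + 4 * delta * (2 * D0 / rho)).
  { eapply Rle_trans; [apply vnorm_add_le|]. apply Rplus_le_compat; [|exact B5].
    eapply Rle_trans; [apply vnorm_sub_le|]. apply Rplus_le_compat; [|exact B4].
    eapply Rle_trans; [apply vnorm_sub_le|]. apply Rplus_le_compat; [|exact HHdd].
    eapply Rle_trans; [apply vnorm_add_le|]. apply Rplus_le_compat; [exact B1|exact B2]. }
  assert (Hw : vnorm a d w <= 45 * D0 * delta / (rho * rho)).
  { apply (Rmult_le_reg_l rho); auto. eapply Rle_trans. exact Gw. eapply Rle_trans. exact Hr.
    replace (rho * (45 * D0 * delta / (rho * rho))) with (45 * D0 * delta / rho) by (field; lra).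
    replace (6 * D0 * delta / rho * 1 + D0 * (3 * delta / rho) + D0 * (3 * delta / rho) + 25 * D0 * delta / rho + 4 * delta * (2 * D0 / rho))
      with (45 * D0 * delta / rho) by (field; lra). lra. }
  assert (Hu : vnorm a d u <= 51 * D0 * delta / (rho * rho)).
  { rewrite (vnorm_ext a d u (fun n => w n + beta * psih theta n)) by (intros; unfold w; ring).
    eapply Rle_trans; [apply vnorm_add_le|].
    assert (vnorm a d (fun n => beta * psih theta n) <= 2 * D0 / rho * (3 * delta / rho) * 1) by (apply vnorm_scal_le; auto; lra).
    replace (51 * D0 * delta / (rho * rho)) with (45 * D0 * delta / (rho * rho) + 2 * D0 / rho * (3 * delta / rho) * 1) by (field; lra).
    lra. }
  set (Dv := fun (s : R) (n : Z) => Derive v (s + IZR n * alpha)).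
  set (Dvv := fun (s : R) (n : Z) => Derive (Derive v) (s + IZR n * alpha)).
  set (K := fun s => zsum a d (fun n => psih s n * (Dv s n * psih s n)) - zsum a d (fun n => psi s n * (Dv s n * psi s n))).
  assert (HK : forall s, ball s -> Derive (fun t => Eh t - Ef t) s = K s).
  { intros s Hs. rewrite Derive_minus.
    2:{ exists (Derive Eh s). exact (Ef_derive _ _ _ _ _ _ _ _ RPI s Hs). }
    2:{ exists (Derive Ef s). exact (Ef_derive _ _ _ _ _ _ _ _ RPJ s Hs). }
    rewrite (HFI s Hs), (HFJ s Hs). unfold K. f_equal.
    - unfold inner. apply zsum_ext. intros n Hn. rewrite Hd_in; auto.
    - unfold inner. rewrite (zsum_J a b c d (fun n => psi s n * (Dv s n * psi s n))); auto.
      apply zsum_ext. intros n Hn. rewrite Hd_in; auto.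
      intros n Hn. rewrite (psi_supp _ _ _ _ _ _ _ _ RPJ s Hs n Hn). ring. }
  set (K' := zsum a d (fun n => dpsi psih theta n * (Dv theta n * psih theta n) + psih theta n * (Dvv theta n * psih theta n + Dv theta n * dpsi psih theta n))
           - zsum a d (fun n => dpsi psi theta n * (Dv theta n * psi theta n) + psi theta n * (Dvv theta n * psi theta n + Dv theta n * dpsi psi theta n))).
  assert (Dterm : forall (ps : R -> Z -> R) n, (forall m, is_derive (fun s => ps s m) theta (dpsi ps theta m)) ->
     is_derive (fun s => ps s n * (Dv s n * ps s n)) theta (dpsi ps theta n * (Dv theta n * ps theta n) + ps theta n * (Dvv theta n * ps theta n + Dv theta n * dpsi ps theta n))).
  { intros ps n Hd. apply (dR_mult (fun s => ps s n) (fun s => Dv s n * ps s n)). apply Hd.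
    apply (dR_mult (fun s => Dv s n) (fun s => ps s n)). unfold Dv, Dvv. apply dR_shift. apply Hv2. apply Hd. }
  assert (HKd : is_derive K theta K').
  { unfold K, K'. apply dR_minus; apply zsum_derive; intros n; apply Dterm; intros m.
    apply (psi_derive _ _ _ _ _ _ _ _ RPI theta Hth). apply (psi_derive _ _ _ _ _ _ _ _ RPJ theta Hth). }
  assert (HD2d : Derive (Derive (fun t => Eh t - Ef t)) theta = K').
  { rewrite (Derive_ext_loc _ K). apply is_derive_unique; auto.
    apply (filter_imp ball). intros s Hs. apply HK; auto. apply Hball; auto. }
  assert (HK'E : K' = 2 * (inner a d u (fun n => Dv theta n * psih theta n) + inner a d (dpsi psi theta) (fun n => Dv theta n * (psih theta n - psi theta n)))
                    + inner a d (fun n => psih theta n - psi theta n) (fun n => Dvv theta n * (psih theta n + psi theta n))).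
  { unfold K', inner. rewrite <- zsum_minus, <- zsum_plus, <- zsum_scal, <- zsum_plus. apply zsum_ext. intros n _. unfold u. ring. }
  assert (HDvb : forall s n, Rabs (Dv s n) <= D0) by (intros; apply HD1).
  assert (HDvvb : forall s n, Rabs (Dvv s n) <= D0) by (intros; apply HD2).
  assert (HK'b : Rabs K' <= 2 * (51 * D0 * delta / (rho * rho) * (D0 * 1) + 2 * D0 / rho * (D0 * (3 * delta / rho))) + 3 * delta / rho * (D0 * (1 + 1))).
  { rewrite HK'E. eapply Rle_trans. apply Rabs_triang. apply Rplus_le_compat.
    - rewrite Rabs_mult, Rabs_pos_eq by lra. apply Rmult_le_compat_l; [lra|].
      eapply Rle_trans. apply Rabs_triang. apply Rplus_le_compat.
      + apply inner_abs_le; auto. rewrite <- phn. apply vnorm_mult_bound; auto; lra.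
      + apply inner_abs_le; auto. eapply Rle_trans. apply vnorm_mult_bound; auto; lra. apply Rmult_le_compat_l; lra.
    - apply inner_abs_le; auto. eapply Rle_trans. apply vnorm_mult_bound; auto; lra. apply Rmult_le_compat_l; [lra|].
      rewrite <- phn at 1. rewrite <- psnI. apply vnorm_add_le. }
  assert (HXY : delta / rho <= delta / (rho * rho)).
  { replace (delta / rho) with (delta / (rho * rho) * rho) by (field; lra).
    assert (0 <= delta / (rho * rho)) by (apply Rdiv_le_0_compat; nra). nra. }
  assert (HX0 : 0 <= delta / rho) by (apply Rdiv_le_0_compat; lra).
  assert (b_dist : vnorm a d (fun n => psih theta n - psi theta n) <= 3 * (delta / rho)).
  { replace (3 * (delta / rho)) with (3 * delta / rho) by (field; lra). exact Hhdist. }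
  assert (b_E' : Rabs (Derive Eh theta - Derive Ef theta) <= 6 * D0 * (delta / rho)).
  { replace (6 * D0 * (delta / rho)) with (6 * D0 * delta / rho) by (field; lra). exact HdE'. }
  assert (b_u : vnorm a d u <= 51 * D0 * (delta / (rho * rho))).
  { replace (51 * D0 * (delta / (rho * rho))) with (51 * D0 * delta / (rho * rho)) by (field; lra). exact Hu. }
  assert (b_K : Rabs K' <= 114 * (D0 * D0) * (delta / (rho * rho)) + 6 * D0 * (delta / rho)).
  { replace (114 * (D0 * D0) * (delta / (rho * rho)) + 6 * D0 * (delta / rho)) with
      (2 * (51 * D0 * delta / (rho * rho) * (D0 * 1) + 2 * D0 / rho * (D0 * (3 * delta / rho))) + 3 * delta / rho * (D0 * (1 + 1))) by (field; lra).
    exact HK'b. }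
  assert (HC : 200 * (1 + D0) ^ 2 = 200 + 400 * D0 + 200 * (D0 * D0)) by ring.
  replace (200 * (1 + D0) ^ 2 * delta / rho) with (200 * (1 + D0) ^ 2 * (delta / rho)) by (field; lra).
  replace (200 * (1 + D0) ^ 2 * delta / rho ^ 2) with (200 * (1 + D0) ^ 2 * (delta / (rho * rho))) by (field; lra).
  rewrite HC.
  split; [|split; [|split; [|split]]].
  - nra.
  - rewrite Derive_minus.
    2:{ exists (Derive Eh theta). exact (Ef_derive _ _ _ _ _ _ _ _ RPI theta Hth). }
    2:{ exists (Derive Ef theta). exact (Ef_derive _ _ _ _ _ _ _ _ RPJ theta Hth). }
    nra.
  - rewrite HD2d. nra.
  - nra.
  - rewrite (vnorm_ext a d _ u).
    + nra.
    + intros n _. unfold u. rewrite Derive_minus; auto.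
      exists (dpsi psih theta n). exact (psi_derive _ _ _ _ _ _ _ _ RPI theta Hth n).
      exists (dpsi psi theta n). exact (psi_derive _ _ _ _ _ _ _ _ RPJ theta Hth n).
Qed.
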